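(* Let $B$ be the open unit disk. Let $\Phi:\partial B\to\gamma$ be an orientation preserving $C^1$ diffeomorphism onto a simple closed curve $\gamma$, $D$ the bounded domain with $\partial D=\gamma$, and $U\in C^2(B;\mathbb R^2)\cap C(\overline B;\mathbb R^2)$ the solution of $\Delta U=0$ in $B$, $U=\Phi$ on $\partial B$, and assume $U\in C^1(\overline B;\mathbb R^2)$. Then $\det DU>0$ everywhere on $\Phi^{-1}(\gamma_c)$.
   Context: With $\mathrm{co}(D)$ the convex hull of $D$, the convex part of $\partial D$ is the closed set $\gamma_c=\partial D\cap\partial(\mathrm{co}(D))$. *)

(* Defs.v *)
From Stdlib Require Import Reals.
From Coquelicot Require Import Coquelicot.
Open Scope R_scope.

Definition pt := (R * R)%type.

Definition dist2 (p q : pt) : R :=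
  sqrt ((fst p - fst q) ^ 2 + (snd p - snd q) ^ 2).

Definition in_B (p : pt) : Prop := fst p ^ 2 + snd p ^ 2 < 1.
Definition in_clB (p : pt) : Prop := fst p ^ 2 + snd p ^ 2 <= 1.
Definition on_circle (p : pt) : Prop := fst p ^ 2 + snd p ^ 2 = 1.

Definition interior (S : pt -> Prop) (p : pt) : Prop :=
  exists e, 0 < e /\ forall q, dist2 p q < e -> S q.
Definition closure (S : pt -> Prop) (p : pt) : Prop :=
  forall e, 0 < e -> exists q, S q /\ dist2 p q < e.
Definition boundary (S : pt -> Prop) (p : pt) : Prop :=
  closure S p /\ ~ interior S p.
Definition is_open (S : pt -> Prop) : Prop := forall p, S p -> interior S p.
Definition is_connected (S : pt -> Prop) : Prop :=
  ~ exists A1 A2 : pt -> Prop,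
      is_open A1 /\ is_open A2 /\
      (forall p, S p -> A1 p \/ A2 p) /\
      (forall p, S p -> A1 p -> A2 p -> False) /\
      (exists p, S p /\ A1 p) /\ (exists p, S p /\ A2 p).
Definition is_bounded (S : pt -> Prop) : Prop :=
  exists M, forall p, S p -> dist2 p (0, 0) <= M.
Definition is_domain (S : pt -> Prop) : Prop :=
  is_open S /\ is_connected S /\ exists p, S p.

Definition is_convex (C : pt -> Prop) : Prop :=
  forall p q t, C p -> C q -> 0 <= t <= 1 ->
    C (t * fst p + (1 - t) * fst q, t * snd p + (1 - t) * snd q).
Definition co (D : pt -> Prop) (p : pt) : Prop :=
  forall C, is_convex C -> (forall q, D q -> C q) -> C p.

Definition gamma_c (D : pt -> Prop) (p : pt) : Prop :=
  boundary D p /\ boundary (co D) p.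

Definition contR_at_in (S : pt -> Prop) (f : pt -> R) (p : pt) : Prop :=
  forall e, 0 < e -> exists d, 0 < d /\
    forall q, S q -> dist2 p q < d -> Rabs (f q - f p) < e.
Definition cont_on (S : pt -> Prop) (F : pt -> pt) : Prop :=
  forall p, S p -> forall e, 0 < e -> exists d, 0 < d /\
    forall q, S q -> dist2 p q < d -> dist2 (F q) (F p) < e.

Definition px (f : pt -> R) (p : pt) : R := Derive (fun s => f (s, snd p)) (fst p).
Definition py (f : pt -> R) (p : pt) : R := Derive (fun s => f (fst p, s)) (snd p).
Definition ex_px (f : pt -> R) (p : pt) : Prop := ex_derive (fun s => f (s, snd p)) (fst p).
Definition ex_py (f : pt -> R) (p : pt) : Prop := ex_derive (fun s => f (fst p, s)) (snd p).

Definition C2_on_B (f : pt -> R) : Prop :=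
  forall p, in_B p ->
    ex_px f p /\ ex_py f p /\
    ex_px (px f) p /\ ex_py (px f) p /\ ex_px (py f) p /\ ex_py (py f) p /\
    contR_at_in in_B f p /\ contR_at_in in_B (px f) p /\ contR_at_in in_B (py f) p /\
    contR_at_in in_B (px (px f)) p /\ contR_at_in in_B (py (px f)) p /\
    contR_at_in in_B (px (py f)) p /\ contR_at_in in_B (py (py f)) p.

Definition laplacian (f : pt -> R) (p : pt) : R := px (px f) p + py (py f) p.

Definition phi1 (Phi : pt -> pt) (t : R) : R := fst (Phi (cos t, sin t)).
Definition phi2 (Phi : pt -> pt) (t : R) : R := snd (Phi (cos t, sin t)).

(* Phi : dB -> gamma is a C^1 diffeomorphism onto its image gamma
   (a simple closed C^1 curve): C^1 in the angle, non-vanishing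
   tangent, injective on the circle. *)
Definition C1_diffeo_circle (Phi : pt -> pt) : Prop :=
  (forall t, ex_derive (phi1 Phi) t /\ ex_derive (phi2 Phi) t) /\
  (forall t, continuous (Derive (phi1 Phi)) t /\ continuous (Derive (phi2 Phi)) t) /\
  (forall t, (Derive (phi1 Phi) t, Derive (phi2 Phi) t) <> (0, 0)) /\
  (forall p q, on_circle p -> on_circle q -> Phi p = Phi q -> p = q).

Definition image_circle (Phi : pt -> pt) (p : pt) : Prop :=
  exists q, on_circle q /\ Phi q = p.

(* Orientation preserving (dB counterclockwise, gamma = dD with its
   boundary orientation): D lies to the left of the tangent, i.e. the
   inward normal J phi'(t) points into D. *)
Definition orientation_preserving (Phi : pt -> pt) (D : pt -> Prop) : Prop :=
  forall t, exists e, 0 < e /\ forall s, 0 < s < e ->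
    D (phi1 Phi t - s * Derive (phi2 Phi) t, phi2 Phi t + s * Derive (phi1 Phi) t).

(* Main.v *)
Require Import Defs.
From Stdlib Require Import Reals.
From Coquelicot Require Import Coquelicot.
From Stdlib Require Import Lra Psatz Classical ClassicalEpsilon List.
Open Scope R_scope.

Lemma sqrt_sum_le a b : sqrt (a ^ 2 + b ^ 2) <= Rabs a + Rabs b.
Proof.
  rewrite <- (sqrt_pow2 (Rabs a + Rabs b)).
  2:{ pose proof (Rabs_pos a); pose proof (Rabs_pos b); lra. }
  apply sqrt_le_1_alt.
  rewrite <- (pow2_abs a), <- (pow2_abs b).
  pose proof (Rabs_pos a); pose proof (Rabs_pos b); nra.
Qed.

Lemma abs_le_sqrt a b : Rabs a <= sqrt (a ^ 2 + b ^ 2).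
Proof.
  rewrite <- (sqrt_pow2 (Rabs a)) by apply Rabs_pos.
  apply sqrt_le_1_alt. rewrite pow2_abs. nra.
Qed.

Lemma dist2_le p q : dist2 p q <= Rabs (fst p - fst q) + Rabs (snd p - snd q).
Proof. apply sqrt_sum_le. Qed.

Lemma dist2_fst p q : Rabs (fst p - fst q) <= dist2 p q.
Proof. apply abs_le_sqrt. Qed.

Lemma dist2_snd p q : Rabs (snd p - snd q) <= dist2 p q.
Proof. unfold dist2. rewrite Rplus_comm. apply abs_le_sqrt. Qed.

Lemma dist2_sym p q : dist2 p q = dist2 q p.
Proof. unfold dist2. f_equal. ring. Qed.

Lemma dist2_pos p q : 0 <= dist2 p q.
Proof. apply sqrt_pos. Qed.

Lemma dist2_refl p : dist2 p p = 0.
Proof. unfold dist2. replace ((fst p - fst p) ^ 2 + (snd p - snd p) ^ 2) with 0 by ring. apply sqrt_0. Qed.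

Lemma sqrt_tri a b c d :
  sqrt ((a + c) ^ 2 + (b + d) ^ 2) <= sqrt (a ^ 2 + b ^ 2) + sqrt (c ^ 2 + d ^ 2).
Proof.
  set (x := sqrt (a ^ 2 + b ^ 2)). set (y := sqrt (c ^ 2 + d ^ 2)).
  assert (hx : 0 <= x) by apply sqrt_pos. assert (hy : 0 <= y) by apply sqrt_pos.
  assert (hx2 : x * x = a ^ 2 + b ^ 2) by (apply sqrt_sqrt; nra).
  assert (hy2 : y * y = c ^ 2 + d ^ 2) by (apply sqrt_sqrt; nra).
  rewrite <- (sqrt_pow2 (x + y)) by lra.
  apply sqrt_le_1_alt.
  assert (a * c + b * d <= x * y).
  { destruct (Rle_dec (a * c + b * d) 0). { assert (0 <= x * y) by (apply Rmult_le_pos; auto). lra. }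
    apply Rsqr_incr_0_var. unfold Rsqr.
    - replace (x * y * (x * y)) with ((x * x) * (y * y)) by ring. rewrite hx2, hy2.
      assert (0 <= (a*d - b*c)^2) by apply pow2_ge_0. nra.
    - apply Rmult_le_pos; auto. }
  nra.
Qed.

Lemma dist2_tri p q r : dist2 p r <= dist2 p q + dist2 q r.
Proof.
  unfold dist2.
  replace (fst p - fst r) with ((fst p - fst q) + (fst q - fst r)) by ring.
  replace (snd p - snd r) with ((snd p - snd q) + (snd q - snd r)) by ring.
  apply sqrt_tri.
Qed.

Lemma dist2_lt p q d : Rabs (fst p - fst q) < d / 2 -> Rabs (snd p - snd q) < d / 2 -> dist2 p q < d.
Proof. intros. pose proof (dist2_le p q). lra. Qed.

Lemma cont_sub S T f p : (forall q, S q -> T q) -> contR_at_in T f p -> contR_at_in S f p.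
Proof. intros H C e he. destruct (C e he) as [d [hd Hd]]. exists d; split; auto. Qed.

Lemma cont_const S c p : contR_at_in S (fun _ => c) p.
Proof. intros e he. exists 1; split; [lra|]. intros. unfold Rminus. rewrite Rplus_opp_r, Rabs_R0. lra. Qed.

Lemma cont_fst S p : contR_at_in S fst p.
Proof. intros e he. exists e; split; auto. intros q _ h. rewrite Rabs_minus_sym. pose proof (dist2_fst p q). lra. Qed.

Lemma cont_snd S p : contR_at_in S snd p.
Proof. intros e he. exists e; split; auto. intros q _ h. rewrite Rabs_minus_sym. pose proof (dist2_snd p q). lra. Qed.

Lemma cont_plus S f g p : contR_at_in S f p -> contR_at_in S g p -> contR_at_in S (fun q => f q + g q) p.
Proof.
  intros Cf Cg e he. destruct (Cf (e/2)) as [d1 [h1 H1]]; [lra|]. destruct (Cg (e/2)) as [d2 [h2 H2]]; [lra|].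
  exists (Rmin d1 d2); split. apply Rmin_pos; auto.
  intros q hq hd. pose proof (Rmin_l d1 d2); pose proof (Rmin_r d1 d2).
  specialize (H1 q hq ltac:(lra)). specialize (H2 q hq ltac:(lra)).
  replace (f q + g q - (f p + g p)) with ((f q - f p) + (g q - g p)) by ring.
  pose proof (Rabs_triang (f q - f p) (g q - g p)). lra.
Qed.

Lemma cont_scal S c f p : contR_at_in S f p -> contR_at_in S (fun q => c * f q) p.
Proof.
  intros Cf e he. destruct (Cf (e / (Rabs c + 1))) as [d [hd H]].
  { apply Rdiv_lt_0_compat; auto. pose proof (Rabs_pos c); lra. }
  exists d; split; auto. intros q hq hdq. specialize (H q hq hdq).
  replace (c * f q - c * f p) with (c * (f q - f p)) by ring. rewrite Rabs_mult.
  pose proof (Rabs_pos c). pose proof (Rabs_pos (f q - f p)).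
  assert (Rabs (f q - f p) * (Rabs c + 1) < e).
  { apply (Rmult_lt_compat_r (Rabs c + 1)) in H; [|lra]. field_simplify in H; lra. }
  nra.
Qed.


Lemma cont_ext S f g p : (forall q, f q = g q) -> contR_at_in S f p -> contR_at_in S g p.
Proof. intros E C e he. destruct (C e he) as [d [hd H]]. exists d; split; auto. intros. rewrite <- !E. auto. Qed.

Lemma cont_mult S f g p : contR_at_in S f p -> contR_at_in S g p -> contR_at_in S (fun q => f q * g q) p.
Proof.
  intros Cf Cg e he.
  set (M := Rabs (f p) + Rabs (g p) + 1).
  assert (hM : 1 <= M) by (unfold M; pose proof (Rabs_pos (f p)); pose proof (Rabs_pos (g p)); lra).
  set (e' := Rmin 1 (e / (4 * M))).
  assert (he' : 0 < e') by (apply Rmin_pos; [lra| apply Rdiv_lt_0_compat; lra]).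
  destruct (Cf e' he') as [d1 [h1 H1]]. destruct (Cg e' he') as [d2 [h2 H2]].
  exists (Rmin d1 d2); split. apply Rmin_pos; auto.
  intros q hq hd. pose proof (Rmin_l d1 d2); pose proof (Rmin_r d1 d2).
  specialize (H1 q hq ltac:(lra)). specialize (H2 q hq ltac:(lra)).
  replace (f q * g q - f p * g p) with ((f q - f p) * g q + f p * (g q - g p)) by ring.
  eapply Rle_lt_trans. apply Rabs_triang. rewrite !Rabs_mult.
  assert (Rabs (g q) <= Rabs (g p) + 1).
  { assert (Hm : e' <= 1) by apply Rmin_l.
    assert (Ht := Rabs_triang (g p) (g q - g p)).
    replace (g p + (g q - g p)) with (g q) in Ht by ring. lra. }
  assert (e' <= e / (4 * M)) by apply Rmin_r.
  assert (hEM : e / (4 * M) * M = e / 4) by (field; lra).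
  pose proof (Rabs_pos (f q - f p)). pose proof (Rabs_pos (g q - g p)). pose proof (Rabs_pos (f p)).
  pose proof (Rabs_pos (g p)).
  assert (Rabs (f q - f p) * Rabs (g q) <= e' * M).
  { apply Rmult_le_compat; auto. apply Rabs_pos. lra. unfold M; lra. }
  assert (Rabs (f p) * Rabs (g q - g p) <= M * e').
  { apply Rmult_le_compat; auto. unfold M; lra. lra. }
  assert (e' * M <= e / 4).
  { rewrite <- hEM. apply Rmult_le_compat_r; lra. }
  lra.
Qed.

Lemma cont_inv S f p : f p <> 0 -> contR_at_in S f p -> contR_at_in S (fun q => / f q) p.
Proof.
  intros nz Cf e he.
  set (a := Rabs (f p)). assert (ha : 0 < a) by (apply Rabs_pos_lt; auto).
  assert (Ea : Rabs (f p) = a) by reflexivity. clearbody a.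
  set (e' := Rmin (a / 2) (e * a * a / 2)).
  assert (he' : 0 < e').
  { apply Rmin_pos. lra. apply Rdiv_lt_0_compat. apply Rmult_lt_0_compat; [apply Rmult_lt_0_compat|]; lra. lra. }
  destruct (Cf e' he') as [d [hd H]]. exists d; split; auto.
  intros q hq hdq. specialize (H q hq hdq).
  pose proof (Rmin_l (a/2) (e * a * a / 2)). pose proof (Rmin_r (a/2) (e * a * a / 2)). fold e' in H0, H1.
  assert (hfq : a / 2 <= Rabs (f q)).
  { assert (Ht := Rabs_triang (f q) (- (f q - f p))). rewrite Rabs_Ropp in Ht.
    replace (f q + - (f q - f p)) with (f p) in Ht by ring. rewrite Ea in Ht. lra. }
  assert (nzq : f q <> 0). { intro E. rewrite E, Rabs_R0 in hfq. lra. }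
  replace (/ f q - / f p) with ((f p - f q) / (f q * f p)) by (field; auto).
  unfold Rdiv. rewrite Rabs_mult, Rabs_inv, Rabs_mult, Ea. rewrite Rabs_minus_sym.
  assert (0 < Rabs (f q)) by lra.
  apply (Rmult_lt_reg_r (Rabs (f q) * a)). nra.
  rewrite Rmult_assoc, Rinv_l by nra. rewrite Rmult_1_r.
  assert (e * (a / 2 * a) <= e * (Rabs (f q) * a)) by (apply Rmult_le_compat_l; nra).
  nra.
Qed.

Definition closedS (S : pt -> Prop) := forall p, closure S p -> S p.
Definition boxS (S : pt -> Prop) := forall p, S p -> -1 <= fst p <= 1 /\ -1 <= snd p <= 1.

Lemma gauge_ex S f (tp : pt) : closedS S -> (S tp -> contR_at_in S f tp) ->
  exists r : posreal, (S tp /\ forall x, S x -> dist2 tp x < r -> Rabs (f x - f tp) < 1) \/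
    (~ S tp /\ forall x, dist2 tp x < r -> ~ S x).
Proof.
  intros cS cf. destruct (classic (S tp)) as [h|h].
  - destruct (cf h 1 ltac:(lra)) as [d [hd H]]. exists (mkposreal d hd). left; split; auto.
  - assert (~ closure S tp) by (intro c; apply h, cS, c).
    unfold closure in H. apply not_all_ex_not in H. destruct H as [e He].
    apply imply_to_and in He. destruct He as [he He].
    exists (mkposreal e he). right; split; auto. intros x hx Sx. apply He. exists x; split; auto.
Qed.

Fixpoint fmax (f : pt -> R) (l : list (Compactness.Tn 2 R)) : R :=
  match l with
  | nil => 0
  | t :: l' => Rmax (f (fst t, fst (snd t)) + 1) (fmax f l')
  end.

Lemma fmax_in f l t : In t l -> f (fst t, fst (snd t)) + 1 <= fmax f l.
Proof.
  induction l as [|t' l IH]; simpl. tauto.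
  intros [<-|h]. apply Rmax_l. eapply Rle_trans. apply IH; auto. apply Rmax_r.
Qed.

Lemma bounded_above S f : closedS S -> boxS S -> (forall p, S p -> contR_at_in S f p) ->
  exists M, forall p, S p -> f p <= M.
Proof.
  intros cS bS cf.
  assert (G : forall t : Compactness.Tn 2 R, {r : posreal | (S (fst t, fst (snd t)) /\ forall x, S x -> dist2 (fst t, fst (snd t)) x < r -> Rabs (f x - f (fst t, fst (snd t))) < 1) \/
    (~ S (fst t, fst (snd t)) /\ forall x, dist2 (fst t, fst (snd t)) x < r -> ~ S x)}).
  { intro t. apply constructive_indefinite_description. apply gauge_ex; auto. }
  set (delta := fun t => mkposreal (proj1_sig (G t) / 4) ltac:(pose proof (cond_pos (proj1_sig (G t))); lra)).
  apply NNPP. intro Hn.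
  apply (compactness_list 2 (-1, (-1, tt)) (1, (1, tt)) delta). intros [l Hl].
  apply Hn. exists (fmax f l). intros [x1 x2] Sx.
  destruct (bS _ Sx) as [b1 b2]. simpl in b1, b2.
  destruct (Hl (x1, (x2, tt))) as [t [It [bt ct]]].
  { simpl. tauto. }
  destruct t as [t1 [t2 []]]. simpl in ct. unfold delta in ct. simpl in ct.
  pose proof (fmax_in f _ _ It) as Hm. simpl in Hm.
  destruct (G (t1, (t2, tt))) as [r Hr]. simpl in ct, Hr.
  assert (hd : dist2 (t1, t2) (x1, x2) < r).
  { destruct ct as [c1 [c2 _]]. pose proof (cond_pos r). apply dist2_lt; simpl; rewrite Rabs_minus_sym; lra. }
  destruct Hr as [[St Hr]|[nSt Hr]].
  - specialize (Hr _ Sx hd). apply Rabs_def2 in Hr. lra.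
  - exfalso. exact (Hr _ hd Sx).
Qed.

Lemma evt S f : closedS S -> boxS S -> (forall p, S p -> contR_at_in S f p) -> (exists p, S p) ->
  exists c, S c /\ forall p, S p -> f p <= f c.
Proof.
  intros cS bS cf [p0 Sp0].
  set (E := fun y => exists x, S x /\ y = f x).
  destruct (bounded_above S f cS bS cf) as [M HM].
  assert (bE : bound E). { exists M. intros y [x [Sx ->]]. auto. }
  assert (nE : exists y, E y) by (exists (f p0); exists p0; auto).
  destruct (completeness E bE nE) as [m [ub lub]].
  assert (le : forall x, S x -> f x <= m) by (intros x Sx; apply ub; exists x; auto).
  destruct (classic (exists c, S c /\ f c = m)) as [[c [Sc Ec]]|H].
  - exists c; split; auto. intros q Sq. rewrite Ec; auto.
  - exfalso.
    assert (lt : forall x, S x -> f x < m).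
    { intros x Sx. destruct (Rle_lt_or_eq_dec _ _ (le x Sx)); auto. exfalso. apply H; exists x; auto. }
    assert (cg : forall x, S x -> contR_at_in S (fun q => / (m + -1 * f q)) x).
    { intros x Sx. apply cont_inv. specialize (lt x Sx). lra.
      apply cont_plus. apply cont_const. apply cont_scal. auto. }
    destruct (bounded_above S _ cS bS cg) as [Mg HMg].
    assert (pos : 0 < Mg).
    { specialize (HMg p0 Sp0). specialize (lt p0 Sp0). assert (0 < / (m + -1 * f p0)). apply Rinv_0_lt_compat; lra. lra. }
    assert (ub2 : is_upper_bound E (m - / Mg)).
    { intros y [x [Sx ->]]. specialize (HMg x Sx). specialize (lt x Sx).
      assert (0 < m + -1 * f x) by lra.
      assert (1 <= Mg * (m + -1 * f x)).
      { apply (Rmult_le_compat_r (m + -1 * f x)) in HMg; [|lra]. rewrite Rinv_l in HMg; lra. }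
      assert (/ Mg <= m + -1 * f x).
      { apply (Rmult_le_reg_l Mg); auto. rewrite Rinv_r; lra. }
      lra. }
    specialize (lub _ ub2). assert (0 < / Mg) by (apply Rinv_0_lt_compat; auto). lra.
Qed.

Lemma max1d (phi d : R -> R) x0 r e : 0 < r ->
  (forall s, Rabs (s - x0) < r -> phi s <= phi x0 /\ is_derive phi s (d s)) ->
  is_derive d x0 e -> e <= 0.
Proof.
  intros hr H de. apply Rnot_lt_le. intro he.
  apply is_derive_Reals in de. destruct (de (e/2) ltac:(lra)) as [dl Hd].
  pose proof (cond_pos dl) as hdl.
  set (h := Rmin dl r / 2).
  assert (hh : 0 < h) by (unfold h; pose proof (Rmin_pos dl r hdl hr); lra).
  assert (hh2 : h < dl /\ h < r) by (unfold h; pose proof (Rmin_l dl r); pose proof (Rmin_r dl r); pose proof (Rmin_pos dl r hdl hr); lra).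
  clearbody h.
  assert (der : forall c, Rabs (c - x0) <= h -> derivable_pt_lim phi c (d c)).
  { intros c hc. apply is_derive_Reals. apply H. lra. }
  destruct (Rle_or_lt 0 (d x0)) as [d0|d0].
  - destruct (MVT_cor2 phi d x0 (x0 + h)) as [c [Ec hc]]. lra.
    { intros c hc. apply der. rewrite Rabs_right; lra. }
    assert (hcd : d c > 0).
    { specialize (Hd (c - x0) ltac:(lra) ltac:(rewrite Rabs_right; lra)).
      replace (x0 + (c - x0)) with c in Hd by ring. apply Rabs_def2 in Hd. destruct Hd as [_ Hd].
      assert ((d c - d x0) / (c - x0) * (c - x0) = d c - d x0) by (field; lra).
      assert (e / 2 * (c - x0) < (d c - d x0) / (c - x0) * (c - x0)).
      { apply Rmult_lt_compat_r; lra. }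
      nra. }
    destruct (H (x0 + h)) as [Hp _]. rewrite Rabs_right; lra.
    nra.
  - destruct (MVT_cor2 phi d (x0 - h) x0) as [c [Ec hc]]. lra.
    { intros c hc. apply der. rewrite Rabs_left1; lra. }
    assert (hcd : d c < 0).
    { specialize (Hd (c - x0) ltac:(lra) ltac:(rewrite Rabs_left; lra)).
      replace (x0 + (c - x0)) with c in Hd by ring. apply Rabs_def2 in Hd. destruct Hd as [_ Hd].
      assert ((d c - d x0) / (c - x0) * (c - x0) = d c - d x0) by (field; lra).
      assert ((d c - d x0) / (c - x0) * (c - x0) < e / 2 * (c - x0)).
      { assert (0 < ((d c - d x0) / (c - x0) - e / 2) * (x0 - c)) by (apply Rmult_lt_0_compat; lra). nra. }
      nra. }
    destruct (H (x0 - h)) as [Hp _]. rewrite Rabs_left; lra.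
    nra.
Qed.

Lemma wmp (S : pt -> Prop) (F : pt -> R) :
  closedS S -> boxS S ->
  (forall p, S p -> contR_at_in S F p) ->
  (forall p, S p -> F p <= 0 \/
     exists r d1 d2 e1 e2, 0 < r /\
       (forall s, Rabs (s - fst p) < r -> S (s, snd p) /\ is_derive (fun s => F (s, snd p)) s (d1 s)) /\
       (forall s, Rabs (s - snd p) < r -> S (fst p, s) /\ is_derive (fun s => F (fst p, s)) s (d2 s)) /\
       is_derive d1 (fst p) e1 /\ is_derive d2 (snd p) e2 /\ 0 < e1 + e2) ->
  forall p, S p -> F p <= 0.
Proof.
  intros cS bS cF Hb p Sp.
  destruct (evt S F cS bS cF (ex_intro _ p Sp)) as [[c1 c2] [Sc Hc]].
  destruct (Hb _ Sc) as [h|[r [d1 [d2 [e1 [e2 [hr [H1 [H2 [D1 [D2 He]]]]]]]]]]].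
  - specialize (Hc p Sp). lra.
  - exfalso. simpl in *.
    assert (e1 <= 0).
    { apply (max1d (fun s => F (s, c2)) d1 c1 r); auto.
      intros s hs. destruct (H1 s hs) as [Ss Ds]. split; auto. }
    assert (e2 <= 0).
    { apply (max1d (fun s => F (c1, s)) d2 c2 r); auto.
      intros s hs. destruct (H2 s hs) as [Ss Ds]. split; auto. }
    lra.
Qed.

Definition reg (f fx fy : pt -> R) : Prop :=
  (forall q, in_B q -> is_derive (fun s => f (s, snd q)) (fst q) (fx q) /\
                      is_derive (fun s => f (fst q, s)) (snd q) (fy q)) /\
  (forall q, in_clB q -> contR_at_in in_clB f q /\ contR_at_in in_clB fx q /\ contR_at_in in_clB fy q).

Lemma clamp_prop a b s : a <= b -> a <= Rmax a (Rmin b s) <= b.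
Proof. intros. unfold Rmax, Rmin; repeat destruct Rle_dec; lra. Qed.
Lemma clamp_id a b s : a <= s <= b -> Rmax a (Rmin b s) = s.
Proof. intros. unfold Rmax, Rmin; repeat destruct Rle_dec; lra. Qed.
Lemma clamp_lip a b s x : a <= x <= b -> Rabs (Rmax a (Rmin b s) - x) <= Rabs (s - x).
Proof. intros. unfold Rmax, Rmin; repeat destruct Rle_dec; unfold Rabs; repeat destruct Rcase_abs; lra. Qed.

Lemma ball_abs (x y e : R) : ball x e y <-> Rabs (y - x) < e.
Proof. unfold ball; simpl; unfold AbsRing_ball, abs, minus, plus, opp; simpl. tauto. Qed.

Lemma mvt_rel (phi dphi : R -> R) a b : a < b ->
  (forall x, a < x < b -> is_derive phi x (dphi x)) ->
  (forall x, a <= x <= b -> forall e, 0 < e -> exists d, 0 < d /\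
       forall y, a <= y <= b -> Rabs (y - x) < d -> Rabs (phi y - phi x) < e) ->
  exists c, a <= c <= b /\ phi b - phi a = dphi c * (b - a).
Proof.
  intros hab D C.
  set (psi := fun s => phi (Rmax a (Rmin b s))).
  destruct (MVT_gen psi a b dphi) as [c [hc Ec]].
  - rewrite Rmin_left, Rmax_right by lra. intros x hx.
    apply (is_derive_ext_loc phi). 2: apply D; auto.
    assert (hp : 0 < Rmin (x - a) (b - x)) by (apply Rmin_pos; lra).
    exists (mkposreal _ hp). intros y hy0. assert (hy : Rabs (y - x) < Rmin (x - a) (b - x)) by (apply ball_abs; exact hy0).
    pose proof (Rmin_l (x - a) (b - x)). pose proof (Rmin_r (x - a) (b - x)).
    unfold psi. apply Rabs_def2 in hy. rewrite clamp_id; auto. lra.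
  - rewrite Rmin_left, Rmax_right by lra. intros x hx.
    unfold continuity_pt, continue_in, limit1_in, limit_in. simpl. unfold R_dist.
    intros e he. destruct (C x hx e he) as [d [hd Hd]]. exists d; split; auto.
    intros y [_ hy]. unfold psi. rewrite (clamp_id a b x) by lra.
    apply Hd. apply clamp_prop; lra. eapply Rle_lt_trans. apply clamp_lip; lra. auto.
  - rewrite Rmin_left, Rmax_right in hc by lra. exists c; split; auto.
    unfold psi in Ec. rewrite !clamp_id in Ec by lra. auto.
Qed.

Lemma seg1 (g dg : R -> R) (In Out : R -> Prop) a b : In a -> In b ->
  (forall s, Rmin a b < s < Rmax a b -> Out s) -> (forall s, Out s -> In s) ->
  (forall s, Out s -> is_derive g s (dg s)) ->
  (forall x, In x -> forall e, 0 < e -> exists d, 0 < d /\ forall y, In y -> Rabs (y - x) < d -> Rabs (g y - g x) < e) ->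
  exists xi, Rmin a b <= xi <= Rmax a b /\ In xi /\ g b - g a = dg xi * (b - a).
Proof.
  intros Ia Ib Hout OI D C.
  assert (InI : forall s, Rmin a b <= s <= Rmax a b -> In s).
  { intros s hs. destruct (Req_dec s a) as [->|]; auto. destruct (Req_dec s b) as [->|]; auto.
    apply OI, Hout. unfold Rmin, Rmax in *; destruct Rle_dec; lra. }
  destruct (Rtotal_order a b) as [h|[h|h]].
  - destruct (mvt_rel g dg a b h) as [c [hc Ec]].
    + intros x hx. apply D, Hout. rewrite Rmin_left, Rmax_right; lra.
    + intros x hx e he. destruct (C x (InI x ltac:(rewrite Rmin_left, Rmax_right; lra)) e he) as [d [hd Hd]].
      exists d; split; auto. intros y hy. apply Hd. apply InI. rewrite Rmin_left, Rmax_right; lra.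
    + exists c. rewrite Rmin_left, Rmax_right by lra. split; auto. split; auto.
      apply InI. rewrite Rmin_left, Rmax_right; lra.
  - subst. exists b. rewrite Rmin_left, Rmax_left by lra. split; [lra|split; [auto|ring]].
  - destruct (mvt_rel g dg b a h) as [c [hc Ec]].
    + intros x hx. apply D, Hout. rewrite Rmin_right, Rmax_left; lra.
    + intros x hx e he. destruct (C x (InI x ltac:(rewrite Rmin_right, Rmax_left; lra)) e he) as [d [hd Hd]].
      exists d; split; auto. intros y hy. apply Hd. apply InI. rewrite Rmin_right, Rmax_left; lra.
    + exists c. rewrite Rmin_right, Rmax_left by lra. split; auto. split.
      apply InI. rewrite Rmin_right, Rmax_left; lra. lra.
Qed.

Lemma in_B_clB q : in_B q -> in_clB q.
Proof. unfold in_B, in_clB. lra. Qed.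

Lemma leg_h f fx fy y a b : reg f fx fy -> in_clB (a, y) -> in_clB (b, y) ->
  (forall s, Rmin a b < s < Rmax a b -> in_B (s, y)) ->
  exists xi, Rmin a b <= xi <= Rmax a b /\ in_clB (xi, y) /\ f (b, y) - f (a, y) = fx (xi, y) * (b - a).
Proof.
  intros [D C] Ia Ib Ho.
  apply (seg1 (fun s => f (s, y)) (fun s => fx (s, y)) (fun s => in_clB (s, y)) (fun s => in_B (s, y))); auto.
  - intros s hs. apply in_B_clB; auto.
  - intros s hs. apply (D (s, y) hs).
  - intros x hx e he. destruct (C _ hx) as [Cf _]. destruct (Cf e he) as [d [hd Hd]].
    exists d; split; auto. intros z hz hzd. apply Hd; auto.
    pose proof (dist2_le (x, y) (z, y)). simpl in H. rewrite Rminus_diag, Rabs_R0 in H.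
    rewrite Rabs_minus_sym in H. lra.
Qed.

Lemma leg_v f fx fy x a b : reg f fx fy -> in_clB (x, a) -> in_clB (x, b) ->
  (forall s, Rmin a b < s < Rmax a b -> in_B (x, s)) ->
  exists xi, Rmin a b <= xi <= Rmax a b /\ in_clB (x, xi) /\ f (x, b) - f (x, a) = fy (x, xi) * (b - a).
Proof.
  intros [D C] Ia Ib Ho.
  apply (seg1 (fun s => f (x, s)) (fun s => fy (x, s)) (fun s => in_clB (x, s)) (fun s => in_B (x, s))); auto.
  - intros s hs. apply in_B_clB; auto.
  - intros s hs. apply (D (x, s) hs).
  - intros z hz e he. destruct (C _ hz) as [Cf _]. destruct (Cf e he) as [d [hd Hd]].
    exists d; split; auto. intros w hw hwd. apply Hd; auto.
    pose proof (dist2_le (x, z) (x, w)). simpl in H. rewrite Rminus_diag, Rabs_R0 in H.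
    rewrite Rabs_minus_sym in H. lra.
Qed.

Lemma btw_bound a b c x d : Rmin a b <= x <= Rmax a b -> Rabs (a - c) < d -> Rabs (b - c) < d -> Rabs (x - c) < d.
Proof. intros. unfold Rmin, Rmax in *; destruct Rle_dec; unfold Rabs in *; repeat destruct Rcase_abs; lra. Qed.

Lemma approx_lin f fx fy p e : reg f fx fy -> in_clB p -> 0 < e ->
  exists d, 0 < d /\ forall a1 a2 b1 b2,
    in_clB (a1, a2) -> in_clB (b1, a2) -> in_clB (b1, b2) ->
    (forall s, Rmin a1 b1 < s < Rmax a1 b1 -> in_B (s, a2)) ->
    (forall s, Rmin a2 b2 < s < Rmax a2 b2 -> in_B (b1, s)) ->
    Rabs (a1 - fst p) < d -> Rabs (a2 - snd p) < d -> Rabs (b1 - fst p) < d -> Rabs (b2 - snd p) < d ->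
    Rabs (f (b1, b2) - f (a1, a2) - (b1 - a1) * fx p - (b2 - a2) * fy p) <= e * (Rabs (b1 - a1) + Rabs (b2 - a2)).
Proof.
  intros R Cp he. pose proof R as [D C].
  destruct (C p Cp) as [_ [Cx Cy]].
  destruct (Cx e he) as [d1 [hd1 H1]]. destruct (Cy e he) as [d2 [hd2 H2]].
  exists (Rmin d1 d2 / 2). split. pose proof (Rmin_pos d1 d2 hd1 hd2); lra.
  intros a1 a2 b1 b2 A C1 B L1 L2 ha1 ha2 hb1 hb2.
  pose proof (Rmin_l d1 d2); pose proof (Rmin_r d1 d2).
  destruct (leg_h f fx fy a2 a1 b1 R A C1 L1) as [xi [hxi [Cxi Exi]]].
  destruct (leg_v f fx fy b1 a2 b2 R C1 B L2) as [ze [hze [Cze Eze]]].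
  assert (k1 : Rabs (fx (xi, a2) - fx p) < e).
  { apply H1; auto. eapply Rle_lt_trans. apply dist2_le. simpl.
    pose proof (btw_bound a1 b1 (fst p) xi _ hxi ha1 hb1). rewrite (Rabs_minus_sym (fst p)), (Rabs_minus_sym (snd p)). lra. }
  assert (k2 : Rabs (fy (b1, ze) - fy p) < e).
  { apply H2; auto. eapply Rle_lt_trans. apply dist2_le. simpl.
    pose proof (btw_bound a2 b2 (snd p) ze _ hze ha2 hb2). rewrite (Rabs_minus_sym (fst p)), (Rabs_minus_sym (snd p)). lra. }
  replace (f (b1, b2) - f (a1, a2) - (b1 - a1) * fx p - (b2 - a2) * fy p) with
     ((b1 - a1) * (fx (xi, a2) - fx p) + (b2 - a2) * (fy (b1, ze) - fy p)).
  2:{ replace (f (b1, b2) - f (a1, a2)) with ((f (b1, b2) - f (b1, a2)) + (f (b1, a2) - f (a1, a2))) by ring.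
      rewrite Exi, Eze. ring. }
  eapply Rle_trans. apply Rabs_triang. rewrite !Rabs_mult.
  pose proof (Rabs_pos (b1 - a1)). pose proof (Rabs_pos (b2 - a2)).
  assert (Rabs (b1 - a1) * Rabs (fx (xi, a2) - fx p) <= Rabs (b1 - a1) * e) by (apply Rmult_le_compat_l; lra).
  assert (Rabs (b2 - a2) * Rabs (fy (b1, ze) - fy p) <= Rabs (b2 - a2) * e) by (apply Rmult_le_compat_l; lra).
  lra.
Qed.

Lemma sq_btw_r r a s : 0 <= r <= 1 -> Rmin (r * a) a < s < Rmax (r * a) a -> s ^ 2 < a ^ 2.
Proof.
  intros hr hs. unfold Rmin, Rmax in hs; destruct Rle_dec;
  (destruct (Rle_or_lt 0 a); [assert (0 <= r * a) by nra | assert (r * a <= 0) by nra]); nra.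
Qed.

Lemma sq_btw2 a b s : Rmin a b < s < Rmax a b -> b ^ 2 <= a ^ 2 -> s ^ 2 < a ^ 2.
Proof.
  intros hs hb. unfold Rmin, Rmax in hs; destruct Rle_dec;
  destruct (Rle_or_lt 0 a); destruct (Rle_or_lt 0 b); destruct (Rle_or_lt 0 s); nra.
Qed.

Lemma zero_of_small x K : 0 <= K -> (forall e, 0 < e <= 1 -> Rabs x <= K * e) -> x = 0.
Proof.
  intros hK H. destruct (Req_dec x 0) as [|n]; auto. exfalso.
  assert (ha : 0 < Rabs x) by (apply Rabs_pos_lt; auto).
  set (e := Rmin 1 (Rabs x / (2 * (K + 1)))).
  assert (he : 0 < e) by (apply Rmin_pos; [lra|apply Rdiv_lt_0_compat; lra]).
  assert (e <= 1) by apply Rmin_l. assert (e <= Rabs x / (2 * (K + 1))) by apply Rmin_r.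
  specialize (H e (conj he H0)).
  assert (K * e <= (K + 1) * (Rabs x / (2 * (K + 1)))) by (apply Rmult_le_compat; lra).
  assert ((K + 1) * (Rabs x / (2 * (K + 1))) = Rabs x / 2) by (field; lra). lra.
Qed.

Lemma radial f fx fy p1 p2 e : reg f fx fy -> on_circle (p1, p2) -> 0 < e ->
  exists r0, 0 < r0 < 1 /\ forall r, r0 < r < 1 ->
    Rabs (f (p1, p2) - f (r * p1, r * p2) - (1 - r) * (p1 * fx (p1, p2) + p2 * fy (p1, p2))) <= 2 * e * (1 - r).
Proof.
  intros R oc he. unfold on_circle in oc; simpl in oc.
  destruct (approx_lin f fx fy (p1, p2) e R ltac:(unfold in_clB; simpl; lra) he) as [d [hd H]].
  exists (Rmax (1/2) (1 - d / 2)). split.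
  split. eapply Rlt_le_trans; [|apply Rmax_l]; lra. apply Rmax_lub_lt; lra.
  intros r [hr1 hr2]. pose proof (Rmax_l (1/2) (1 - d/2)). pose proof (Rmax_r (1/2) (1 - d/2)).
  assert (b1 : Rabs p1 <= 1). { apply Rabs_le. nra. }
  assert (b2 : Rabs p2 <= 1). { apply Rabs_le. nra. }
  assert (E1 : Rabs (r * p1 - p1) = (1 - r) * Rabs p1).
  { replace (r * p1 - p1) with (- ((1 - r) * p1)) by ring. rewrite Rabs_Ropp, Rabs_mult, Rabs_right; lra. }
  assert (E2 : Rabs (r * p2 - p2) = (1 - r) * Rabs p2).
  { replace (r * p2 - p2) with (- ((1 - r) * p2)) by ring. rewrite Rabs_Ropp, Rabs_mult, Rabs_right; lra. }
  assert (F1 : Rabs (p1 - r * p1) = (1 - r) * Rabs p1) by (rewrite Rabs_minus_sym; auto).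
  assert (F2 : Rabs (p2 - r * p2) = (1 - r) * Rabs p2) by (rewrite Rabs_minus_sym; auto).
  specialize (H (r * p1) (r * p2) p1 p2).
  simpl in H.
  assert (Hr : Rabs (f (p1, p2) - f (r * p1, r * p2) - (p1 - r * p1) * fx (p1, p2) - (p2 - r * p2) * fy (p1, p2)) <=
     e * (Rabs (p1 - r * p1) + Rabs (p2 - r * p2))).
  assert (hrr : 0 <= 1 - r ^ 2) by nra.
  assert (q1 : 0 <= p1 ^ 2 * (1 - r ^ 2)) by (apply Rmult_le_pos; nra).
  assert (q2 : 0 <= p2 ^ 2 * (1 - r ^ 2)) by (apply Rmult_le_pos; nra).
  { apply H.
    - unfold in_clB; simpl. nra.
    - unfold in_clB; simpl. nra.
    - unfold in_clB; simpl. nra.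
    - intros s hs. unfold in_B; simpl. pose proof (sq_btw_r r p1 s ltac:(lra) hs). nra.
    - intros s hs. unfold in_B; simpl. pose proof (sq_btw_r r p2 s ltac:(lra) hs). nra.
    - rewrite E1. nra.
    - rewrite E2. nra.
    - rewrite Rminus_diag, Rabs_R0. lra.
    - rewrite Rminus_diag, Rabs_R0. lra. }
  rewrite F1, F2 in Hr.
  replace (f (p1, p2) - f (r * p1, r * p2) - (1 - r) * (p1 * fx (p1, p2) + p2 * fy (p1, p2))) with
    (f (p1, p2) - f (r * p1, r * p2) - (p1 - r * p1) * fx (p1, p2) - (p2 - r * p2) * fy (p1, p2)) by ring.
  eapply Rle_trans. apply Hr.
  assert ((1 - r) * Rabs p1 <= (1 - r) * 1) by (apply Rmult_le_compat_l; lra).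
  assert ((1 - r) * Rabs p2 <= (1 - r) * 1) by (apply Rmult_le_compat_l; lra).
  assert (e * ((1 - r) * Rabs p1 + (1 - r) * Rabs p2) <= e * (2 * (1 - r))) by (apply Rmult_le_compat_l; lra).
  lra.
Qed.

Lemma Rabs_def2b x a : Rabs x <= a -> - a <= x <= a.
Proof. unfold Rabs; destruct Rcase_abs; lra. Qed.

Lemma dq_bound A h l e : 0 < h -> Rabs (A / h - l) < e -> Rabs (A - l * h) <= e * h.
Proof.
  intros hh H. replace (A - l * h) with (h * (A / h - l)) by (field; lra).
  rewrite Rabs_mult, Rabs_right by lra. nra.
Qed.

Lemma circ_id x : cos x ^ 2 + sin x ^ 2 = 1.
Proof. pose proof (sin2_cos2 x). unfold Rsqr in H. nra. Qed.

Lemma abs_mul_le a b k : Rabs a <= k -> Rabs (a * b) <= k * Rabs b.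
Proof. intros. rewrite Rabs_mult. apply Rmult_le_compat_r; auto. apply Rabs_pos. Qed.

Lemma tangent f fx fy t l : reg f fx fy -> is_derive (fun s => f (cos s, sin s)) t l ->
  l = - sin t * fx (cos t, sin t) + cos t * fy (cos t, sin t).
Proof.
  intros R D.
  set (c0 := cos t). set (s0 := sin t). set (X := fx (c0, s0)). set (Y := fy (c0, s0)).
  apply Rminus_diag_uniq.
  apply (zero_of_small _ (5 + Rabs X + Rabs Y)). pose proof (Rabs_pos X); pose proof (Rabs_pos Y); lra.
  intros e [he he1].
  assert (cp : in_clB (c0, s0)). { unfold in_clB; simpl. pose proof (circ_id t) as Hci. fold c0 s0 in Hci. lra. }
  destruct (approx_lin f fx fy (c0, s0) e R cp he) as [d [hd H]]. simpl in H.
  apply is_derive_Reals in D.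
  destruct (D e he) as [dF HF].
  destruct (derivable_pt_lim_cos t e he) as [dc Hc].
  destruct (derivable_pt_lim_sin t e he) as [ds Hs].
  pose proof (cond_pos dF); pose proof (cond_pos dc); pose proof (cond_pos ds).
  set (h := Rmin (Rmin dF dc) (Rmin ds (d / 8)) / 2).
  assert (hh : 0 < h /\ h < dF /\ h < dc /\ h < ds /\ h < d / 8).
  { unfold h. pose proof (Rmin_l (Rmin dF dc) (Rmin ds (d / 8))). pose proof (Rmin_r (Rmin dF dc) (Rmin ds (d / 8))).
    pose proof (Rmin_l dF dc). pose proof (Rmin_r dF dc). pose proof (Rmin_l ds (d/8)). pose proof (Rmin_r ds (d/8)).
    assert (0 < Rmin (Rmin dF dc) (Rmin ds (d / 8))) by (repeat apply Rmin_pos; lra). lra. }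
  clearbody h. destruct hh as [hh [h1 [h2 [h3 h4]]]].
  assert (hn : h <> 0) by lra. assert (ha : Rabs h < dF) by (rewrite Rabs_right; lra).
  specialize (HF h hn ha). apply dq_bound in HF; auto. simpl in HF.
  assert (Ec : Rabs (cos (t + h) - cos t - - sin t * h) <= e * h).
  { apply dq_bound; auto. apply Hc; auto. rewrite Rabs_right; lra. }
  assert (Es : Rabs (sin (t + h) - sin t - cos t * h) <= e * h).
  { apply dq_bound; auto. apply Hs; auto. rewrite Rabs_right; lra. }
  fold c0 s0 in Ec, Es, HF.
  set (c1 := cos (t + h)) in *. set (s1 := sin (t + h)) in *.
  assert (k0 : c0 ^ 2 + s0 ^ 2 = 1) by apply circ_id.
  assert (k1 : c1 ^ 2 + s1 ^ 2 = 1) by apply circ_id.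
  assert (bc : Rabs c0 <= 1) by (apply Rabs_le; apply COS_bound). assert (bs : Rabs s0 <= 1) by (apply Rabs_le; apply SIN_bound).
  assert (dc1 : Rabs (c1 - c0) <= 2 * h).
  { apply Rabs_def2b in Ec. apply Rabs_le. assert (Rabs (s0 * h) <= h).
    { rewrite Rabs_mult, (Rabs_right h) by lra. nra. } apply Rabs_def2b in H3. nra. }
  assert (ds1 : Rabs (s1 - s0) <= 2 * h).
  { apply Rabs_def2b in Es. apply Rabs_le. assert (Rabs (c0 * h) <= h).
    { rewrite Rabs_mult, (Rabs_right h) by lra. nra. } apply Rabs_def2b in H3. nra. }
  assert (Main : Rabs (f (c1, s1) - f (c0, s0) - (c1 - c0) * X - (s1 - s0) * Y) <= e * (Rabs (c1 - c0) + Rabs (s1 - s0))).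
  { destruct (Rle_or_lt (c1 ^ 2) (c0 ^ 2)) as [cc|cc].
    - apply H.
      + auto.
      + unfold in_clB; simpl; lra.
      + unfold in_clB; simpl; lra.
      + intros s hs. unfold in_B; simpl. pose proof (sq_btw2 c0 c1 s hs cc). lra.
      + intros s hs. unfold in_B; simpl. rewrite Rmin_comm, Rmax_comm in hs.
        pose proof (sq_btw2 s1 s0 s hs ltac:(lra)). lra.
      + rewrite Rminus_diag, Rabs_R0; lra.
      + rewrite Rminus_diag, Rabs_R0; lra.
      + lra.
      + lra.
    - assert (Hs' : Rabs (f (c0, s0) - f (c1, s1) - (c0 - c1) * X - (s0 - s1) * Y) <= e * (Rabs (c0 - c1) + Rabs (s0 - s1))).
      { apply H.
        + unfold in_clB; simpl; lra.
        + unfold in_clB; simpl; lra.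
        + auto.
        + intros s hs. unfold in_B; simpl. pose proof (sq_btw2 c1 c0 s hs ltac:(lra)). lra.
        + intros s hs. unfold in_B; simpl. rewrite Rmin_comm, Rmax_comm in hs.
          pose proof (sq_btw2 s0 s1 s hs ltac:(lra)). lra.
        + lra.
        + lra.
        + rewrite Rminus_diag, Rabs_R0; lra.
        + rewrite Rminus_diag, Rabs_R0; lra. }
      rewrite (Rabs_minus_sym c0 c1), (Rabs_minus_sym s0 s1) in Hs'.
      replace (f (c0, s0) - f (c1, s1) - (c0 - c1) * X - (s0 - s1) * Y) with
        (- (f (c1, s1) - f (c0, s0) - (c1 - c0) * X - (s1 - s0) * Y)) in Hs' by ring.
      rewrite Rabs_Ropp in Hs'. auto. }
  assert (T1 : Rabs ((c1 - c0 - - s0 * h) * X) <= e * h * Rabs X) by (apply abs_mul_le; auto).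
  assert (T2 : Rabs ((s1 - s0 - c0 * h) * Y) <= e * h * Rabs Y) by (apply abs_mul_le; auto).
  assert (Eq : (l - (- s0 * X + c0 * Y)) * h =
     - (f (c1, s1) - f (c0, s0) - l * h) + (f (c1, s1) - f (c0, s0) - (c1 - c0) * X - (s1 - s0) * Y)
     + (c1 - c0 - - s0 * h) * X + (s1 - s0 - c0 * h) * Y) by ring.
  assert (Bd : Rabs ((l - (- s0 * X + c0 * Y)) * h) <= e * h * (5 + Rabs X + Rabs Y)).
  { rewrite Eq. 
    eapply Rle_trans. apply Rabs_triang. eapply Rle_trans. apply Rplus_le_compat_r. apply Rabs_triang.
    eapply Rle_trans. apply Rplus_le_compat_r. apply Rplus_le_compat_r. apply Rabs_triang.
    rewrite Rabs_Ropp. 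
    assert (e * (Rabs (c1 - c0) + Rabs (s1 - s0)) <= e * (4 * h)) by (apply Rmult_le_compat_l; lra).
    lra. }
  rewrite Rabs_mult, (Rabs_right h) in Bd by lra.
  apply (Rmult_le_reg_r h); auto. lra.
Qed.

Lemma co_convex D : is_convex (co D).
Proof. intros p q t Hp Hq ht C cC sub. apply cC; auto. apply Hp; auto. apply Hq; auto. Qed.

Lemma sub_co D q : D q -> co D q.
Proof. intros Dq C cC sub. auto. Qed.

Lemma closure_mono (A B : pt -> Prop) q : (forall x, A x -> B x) -> closure A q -> closure B q.
Proof. intros sub c e he. destruct (c e he) as [x [Ax hx]]. exists x; split; auto. Qed.

Lemma sqrt_scal k u1 u2 : sqrt ((k * u1) ^ 2 + (k * u2) ^ 2) = Rabs k * sqrt (u1 ^ 2 + u2 ^ 2).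
Proof.
  replace ((k * u1) ^ 2 + (k * u2) ^ 2) with (k ^ 2 * (u1 ^ 2 + u2 ^ 2)) by ring.
  rewrite sqrt_mult_alt by (apply pow2_ge_0). rewrite <- (pow2_abs k), sqrt_pow2 by apply Rabs_pos. auto.
Qed.

Lemma nlin a b u1 u2 v1 v2 :
  sqrt ((a * u1 + b * v1) ^ 2 + (a * u2 + b * v2) ^ 2) <= Rabs a * sqrt (u1 ^ 2 + u2 ^ 2) + Rabs b * sqrt (v1 ^ 2 + v2 ^ 2).
Proof. rewrite <- !sqrt_scal. apply sqrt_tri. Qed.

Lemma ball_cone (C : pt -> Prop) c a rho lam : is_convex C -> 0 < rho -> 0 < lam <= 1 ->
  (forall x, dist2 c x < rho -> C x) -> closure C a ->
  forall x, dist2 (fst a + lam * (fst c - fst a), snd a + lam * (snd c - snd a)) x < lam * rho / 2 -> C x.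
Proof.
  intros cC hr hl Bc cl [x1 x2] hx.
  destruct (cl (lam * rho / 2) ltac:(nra)) as [[a1' a2'] [Ca' ha']].
  destruct a as [a1 a2]. destruct c as [c1 c2]. cbn [fst snd] in *.
  set (m1 := a1 + lam * (c1 - a1)) in *. set (m2 := a2 + lam * (c2 - a2)) in *.
  set (d1 := a1' + (x1 - a1') / lam). set (d2 := a2' + (x2 - a2') / lam).
  assert (Cd : C (d1, d2)).
  { apply Bc. unfold dist2; cbn [fst snd].
    replace (c1 - d1) with (/ lam * (m1 - x1) + ((lam - 1) / lam) * (a1 - a1')) by (unfold d1, m1; field; lra).
    replace (c2 - d2) with (/ lam * (m2 - x2) + ((lam - 1) / lam) * (a2 - a2')) by (unfold d2, m2; field; lra).
    eapply Rle_lt_trans. apply nlin.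
    unfold dist2 in hx, ha'. cbn [fst snd] in hx, ha'.
    rewrite Rabs_right by (apply Rle_ge; apply Rlt_le; apply Rinv_0_lt_compat; lra).
    rewrite Rabs_left1 by (apply Rmult_le_0_r; [lra| apply Rlt_le; apply Rinv_0_lt_compat; lra]).
    set (A := sqrt ((m1 - x1) ^ 2 + (m2 - x2) ^ 2)) in *. set (B := sqrt ((a1 - a1') ^ 2 + (a2 - a2') ^ 2)) in *.
    assert (0 <= B) by apply sqrt_pos.
    replace (/ lam * A + - ((lam - 1) / lam) * B) with ((A + (1 - lam) * B) / lam) by (field; lra).
    apply (Rmult_lt_reg_r lam); [lra|]. unfold Rdiv. rewrite Rmult_assoc, Rinv_l, Rmult_1_r by lra.
    assert ((1 - lam) * B <= (1 - lam) * (lam * rho / 2)) by (apply Rmult_le_compat_l; lra).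
    assert ((1 - lam) * (lam * rho / 2) <= lam * rho / 2).
    { assert (0 <= lam * (lam * rho / 2)) by (apply Rmult_le_pos; nra). nra. }
    lra. }
  pose proof (cC (d1, d2) (a1', a2') lam Cd Ca' ltac:(lra)) as H. cbn [fst snd] in H.
  replace (lam * d1 + (1 - lam) * a1') with x1 in H by (unfold d1; field; lra).
  replace (lam * d2 + (1 - lam) * a2') with x2 in H by (unfold d2; field; lra). auto.
Qed.

Lemma phi_pair Phi s : Phi (cos s, sin s) = (phi1 Phi s, phi2 Phi s).
Proof. unfold phi1, phi2. destruct (Phi (cos s, sin s)); auto. Qed.

Lemma on_circle_cs s : on_circle (cos s, sin s).
Proof. unfold on_circle; simpl. apply circ_id. Qed.

Lemma curve_bd Phi D s : (forall p, boundary D p <-> image_circle Phi p) -> boundary D (phi1 Phi s, phi2 Phi s).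
Proof. intros H. apply H. exists (cos s, sin s). split. apply on_circle_cs. apply phi_pair. Qed.

Lemma deriv_err f t l e : is_derive f t l -> 0 < e -> exists d, 0 < d /\ forall u, Rabs u < d -> Rabs (f (t + u) - f t - u * l) <= e * Rabs u.
Proof.
  intros D he. apply is_derive_Reals in D. destruct (D e he) as [d Hd].
  exists d; split. apply cond_pos. intros u hu.
  destruct (Req_dec u 0) as [->|nz].
  - rewrite Rplus_0_r. replace (f t - f t - 0 * l) with 0 by ring. rewrite Rabs_R0. lra.
  - specialize (Hd u nz hu). replace (f (t + u) - f t - u * l) with (u * ((f (t + u) - f t) / u - l)) by (field; auto).
    rewrite Rabs_mult. rewrite Rmult_comm. apply Rmult_le_compat_r. apply Rabs_pos. lra.
Qed.

Lemma support Phi D (t : R) : C1_diffeo_circle Phi -> is_open D ->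
  (forall p, boundary D p <-> image_circle Phi p) -> orientation_preserving Phi D ->
  ~ Defs.interior (co D) (phi1 Phi t, phi2 Phi t) ->
  forall q, boundary D q ->
    - Derive (phi2 Phi) t * (fst q - phi1 Phi t) + Derive (phi1 Phi) t * (snd q - phi2 Phi t) >= 0.
Proof.
  intros [Dif [_ [Nz _]]] oD bd orient nint [q1 q2] bq. cbn [fst snd].
  set (z1 := phi1 Phi t) in *. set (z2 := phi2 Phi t) in *.
  set (t1 := Derive (phi1 Phi) t). set (t2 := Derive (phi2 Phi) t).
  apply Rnot_lt_ge. intro vq_neg.
  set (vq := - t2 * (q1 - z1) + t1 * (q2 - z2)) in *.
  set (T := t1 ^ 2 + t2 ^ 2).
  assert (hT : 0 < T).
  { unfold T. destruct (Req_dec t1 0); destruct (Req_dec t2 0).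
    - exfalso. apply (Nz t). fold t1 t2. rewrite H, H0; reflexivity.
    - assert (0 < t2 ^ 2) by (apply pow2_gt_0; auto). nra.
    - assert (0 < t1 ^ 2) by (apply pow2_gt_0; auto). nra.
    - assert (0 < t1 ^ 2) by (apply pow2_gt_0; auto). nra. }
  assert (eT : T = t1 ^ 2 + t2 ^ 2) by reflexivity. clearbody T.
  set (C := co D).
  assert (cC : is_convex C) by apply co_convex.
  destruct (orient t) as [e0 [he0 He0]].
  set (s0 := e0 / 2).
  assert (DA : D (z1 - s0 * t2, z2 + s0 * t1)) by (apply He0; unfold s0; lra).
  destruct (oD _ DA) as [rho0 [hrho0 Hrho0]].
  assert (BA : forall x, dist2 (z1 - s0 * t2, z2 + s0 * t1) x < rho0 -> C x).
  { intros x hx. apply sub_co. apply Hrho0; auto. }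
  assert (clq : closure C (q1, q2)).
  { apply (closure_mono D). apply sub_co. apply bq. }
  set (vA := s0 * T).
  assert (hvA : 0 < vA) by (unfold vA, s0; apply Rmult_lt_0_compat; lra).
  set (lam := - vq / (vA - vq)).
  assert (hlam : 0 < lam < 1).
  { unfold lam. split. apply Rdiv_lt_0_compat; lra.
    apply (Rmult_lt_reg_r (vA - vq)); [lra|]. unfold Rdiv. rewrite Rmult_assoc, Rinv_l by lra. lra. }
  pose proof (ball_cone C (z1 - s0 * t2, z2 + s0 * t1) (q1, q2) rho0 lam cC hrho0 ltac:(lra) BA clq) as Bm.
  cbn [fst snd] in Bm.
  set (m1 := q1 + lam * (z1 - s0 * t2 - q1)) in *. set (m2 := q2 + lam * (z2 + s0 * t1 - q2)) in *.
  set (rho1 := lam * rho0 / 2) in *.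
  assert (hrho1 : 0 < rho1) by (unfold rho1; nra).
  assert (nm : - t2 * (m1 - z1) + t1 * (m2 - z2) = 0).
  { assert (hden : vA - vq <> 0) by lra.
    unfold m1, m2, lam, vq, vA in hden |- *. rewrite eT in hden |- *. field. exact hden. }
  set (mu := (t1 * (m1 - z1) + t2 * (m2 - z2)) / T).
  assert (em1 : m1 = z1 + mu * t1).
  { unfold mu. apply (Rmult_eq_reg_r T); [|lra]. field_simplify; [|lra]. rewrite eT.
    assert (t2 * (- t2 * (m1 - z1) + t1 * (m2 - z2)) = 0) by (rewrite nm; ring). nra. }
  assert (em2 : m2 = z2 + mu * t2).
  { unfold mu. apply (Rmult_eq_reg_r T); [|lra]. field_simplify; [|lra]. rewrite eT.
    assert (t1 * (- t2 * (m1 - z1) + t1 * (m2 - z2)) = 0) by (rewrite nm; ring). nra. }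
  clearbody m1 m2.
  set (K := Rabs mu + 1).
  assert (hK : 0 < K) by (unfold K; pose proof (Rabs_pos mu); lra).
  set (eps := rho1 / (8 * K)).
  assert (heps : 0 < eps) by (unfold eps; apply Rdiv_lt_0_compat; lra).
  destruct (Dif t) as [ex1 ex2].
  destruct (deriv_err (phi1 Phi) t t1 eps (Derive_correct _ _ ex1) heps) as [dl1 [hdl1 H1]].
  destruct (deriv_err (phi2 Phi) t t2 eps (Derive_correct _ _ ex2) heps) as [dl2 [hdl2 H2]].
  set (h := Rmin 1 (Rmin dl1 dl2 / (2 * K))).
  assert (hh : 0 < h) by (unfold h; apply Rmin_pos; [lra| apply Rdiv_lt_0_compat; [apply Rmin_pos; auto|lra]]).
  assert (hh1 : h <= 1) by apply Rmin_l.
  assert (hh2 : h <= Rmin dl1 dl2 / (2 * K)) by apply Rmin_r.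
  clearbody h.
  set (u := - h * mu).
  assert (hu : Rabs u = h * Rabs mu) by (unfold u; rewrite Rabs_mult, Rabs_Ropp, Rabs_right; lra).
  assert (hud : Rabs u < Rmin dl1 dl2).
  { rewrite hu. assert (h * Rabs mu <= h * K) by (apply Rmult_le_compat_l; unfold K; lra).
    assert (h * K <= Rmin dl1 dl2 / 2).
    { apply (Rmult_le_compat_r K) in hh2; [|lra]. replace (Rmin dl1 dl2 / (2 * K) * K) with (Rmin dl1 dl2 / 2) in hh2 by (field; lra). auto. }
    pose proof (Rmin_pos dl1 dl2 hdl1 hdl2). lra. }
  pose proof (Rmin_l dl1 dl2); pose proof (Rmin_r dl1 dl2).
  specialize (H1 u ltac:(lra)). specialize (H2 u ltac:(lra)). fold z1 in H1. fold z2 in H2.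
  set (b1 := phi1 Phi (t + u)) in *. set (b2 := phi2 Phi (t + u)) in *.
  assert (clb : closure C (b1, b2)).
  { apply (closure_mono D). apply sub_co. apply curve_bd; auto. }
  set (lam' := h / (1 + h)).
  assert (hlam' : 0 < lam' <= 1) by (unfold lam'; split; [apply Rdiv_lt_0_compat; lra| apply (Rmult_le_reg_r (1 + h)); [lra|]; unfold Rdiv; rewrite Rmult_assoc, Rinv_l; lra]).
  pose proof (ball_cone C (m1, m2) (b1, b2) rho1 lam' cC hrho1 hlam' Bm clb) as Bf.
  cbn [fst snd] in Bf.
  set (e1 := b1 - z1 - u * t1) in *. set (e2 := b2 - z2 - u * t2) in *.
  assert (E1 : b1 + lam' * (m1 - b1) - z1 = (1 - lam') * e1).
  { unfold e1, lam', u. rewrite em1. field. lra. }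
  assert (E2 : b2 + lam' * (m2 - b2) - z2 = (1 - lam') * e2).
  { unfold e2, lam', u. rewrite em2. field. lra. }
  set (w1 := b1 + lam' * (m1 - b1)) in *. set (w2 := b2 + lam' * (m2 - b2)) in *.
  assert (dwz : dist2 (w1, w2) (z1, z2) < lam' * rho1 / 2).
  { eapply Rle_lt_trans. apply dist2_le. cbn [fst snd]. rewrite E1, E2, !Rabs_mult.
    rewrite (Rabs_right (1 - lam')) by lra.
    assert (Rabs e1 + Rabs e2 <= 2 * eps * Rabs u) by lra.
    assert (2 * eps * Rabs u < h * rho1 / 4).
    { rewrite hu. unfold eps. replace (2 * (rho1 / (8 * K)) * (h * Rabs mu)) with ((h * rho1 / 4) * (Rabs mu / K)) by (field; lra).
      assert (Rabs mu / K < 1). { apply (Rmult_lt_reg_r K); auto. unfold Rdiv; rewrite Rmult_assoc, Rinv_l; unfold K; pose proof (Rabs_pos mu); lra. }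
      assert (0 < h * rho1 / 4) by nra. nra. }
    assert (h * rho1 / 4 <= lam' * rho1 / 2).
    { unfold lam'. apply (Rmult_le_reg_r (4 * (1 + h))); [lra|]. field_simplify; [|lra].
      assert (0 <= (1 - h) * (h * rho1)) by (apply Rmult_le_pos; nra). nra. }
    pose proof (Rabs_pos e1); pose proof (Rabs_pos e2).
    assert ((1 - lam') * Rabs e1 + (1 - lam') * Rabs e2 <= Rabs e1 + Rabs e2) by nra. lra. }
  apply nint. exists (lam' * rho1 / 2 - dist2 (w1, w2) (z1, z2)). split. lra.
  intros x hx. apply Bf. eapply Rle_lt_trans. apply (dist2_tri _ (z1, z2)). lra.
Qed.

Lemma nondeg Phi (t1 t2 z1 z2 : R) : C1_diffeo_circle Phi -> 0 < t1 ^ 2 + t2 ^ 2 ->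
  (forall th, - t2 * (phi1 Phi th - z1) + t1 * (phi2 Phi th - z2) >= 0) ->
  exists th, - t2 * (phi1 Phi th - z1) + t1 * (phi2 Phi th - z2) > 0.
Proof.
  intros [Dif [_ [Nz _]]] hT Hge. apply NNPP. intro Hn.
  assert (Hz : forall th, - t2 * (phi1 Phi th - z1) + t1 * (phi2 Phi th - z2) = 0).
  { intro th. specialize (Hge th). apply Rge_le in Hge. destruct (Rle_lt_or_eq_dec _ _ Hge) as [h|h]; auto.
    exfalso. apply Hn. exists th. lra. }
  assert (Dn : forall th, - t2 * Derive (phi1 Phi) th + t1 * Derive (phi2 Phi) th = 0).
  { intro th. destruct (Dif th) as [e1 e2].
    assert (D1 : is_derive (fun s => - t2 * (phi1 Phi s - z1) + t1 * (phi2 Phi s - z2)) th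
                   (- t2 * (1 * Derive (fun x => phi1 Phi x) th) + t1 * (1 * Derive (fun x => phi2 Phi x) th))).
    { auto_derive; auto. }
    rewrite !Rmult_1_l in D1.
    assert (D2 : is_derive (fun s => - t2 * (phi1 Phi s - z1) + t1 * (phi2 Phi s - z2)) th 0).
    { apply (is_derive_ext (fun _ => 0)). intro s. rewrite Hz; auto. auto_derive; auto. }
    apply is_derive_unique in D1. apply is_derive_unique in D2. rewrite D2 in D1. exact (eq_sym D1). }
  set (u := fun s => t1 * phi1 Phi s + t2 * phi2 Phi s).
  assert (Du : forall s, is_derive u s (t1 * Derive (phi1 Phi) s + t2 * Derive (phi2 Phi) s)).
  { intro s. destruct (Dif s) as [e1 e2]. unfold u.
    assert (D1 : is_derive (fun s => t1 * phi1 Phi s + t2 * phi2 Phi s) s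
                   (t1 * (1 * Derive (fun x => phi1 Phi x) s) + t2 * (1 * Derive (fun x => phi2 Phi x) s))).
    { auto_derive; auto. }
    rewrite !Rmult_1_l in D1. exact D1. }
  destruct (MVT_gen u 0 (2 * PI) (fun s => t1 * Derive (phi1 Phi) s + t2 * Derive (phi2 Phi) s)) as [c [hc Ec]].
  - intros. apply Du.
  - intros x _. apply derivable_continuous_pt. eexists. apply is_derive_Reals, Du.
  - assert (u (2 * PI) = u 0).
    { unfold u, phi1, phi2. rewrite cos_2PI, sin_2PI, cos_0, sin_0. auto. }
    assert (hpi : 0 < 2 * PI) by (pose proof PI_RGT_0; lra).
    assert (E : t1 * Derive (phi1 Phi) c + t2 * Derive (phi2 Phi) c = 0).
    { rewrite H in Ec. rewrite Rminus_0_r in Ec.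
      assert ((t1 * Derive (phi1 Phi) c + t2 * Derive (phi2 Phi) c) * (2 * PI) = 0) by lra.
      apply Rmult_integral in H0. destruct H0; auto. lra. }
    specialize (Dn c).
    apply (Nz c).
    assert (A1 : (t1 ^ 2 + t2 ^ 2) * Derive (phi1 Phi) c = 0).
    { replace ((t1 ^ 2 + t2 ^ 2) * Derive (phi1 Phi) c) with
        (t1 * (t1 * Derive (phi1 Phi) c + t2 * Derive (phi2 Phi) c) - t2 * (- t2 * Derive (phi1 Phi) c + t1 * Derive (phi2 Phi) c)) by ring.
      rewrite E, Dn. ring. }
    assert (A2 : (t1 ^ 2 + t2 ^ 2) * Derive (phi2 Phi) c = 0).
    { replace ((t1 ^ 2 + t2 ^ 2) * Derive (phi2 Phi) c) with
        (t2 * (t1 * Derive (phi1 Phi) c + t2 * Derive (phi2 Phi) c) + t1 * (- t2 * Derive (phi1 Phi) c + t1 * Derive (phi2 Phi) c)) by ring.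
      rewrite E, Dn. ring. }
    apply Rmult_integral in A1. apply Rmult_integral in A2.
    destruct A1 as [A1|A1]; [lra|]. destruct A2 as [A2|A2]; [lra|]. rewrite A1, A2. auto.
Qed.

Definition Dn (a1 a2 x y : R) := (a1 - x) ^ 2 + (a2 - y) ^ 2.
Definition kk (a1 a2 x y : R) := (a1 * (a1 - x) + a2 * (a2 - y)) / Dn a1 a2 x y.
Definition kx (a1 a2 x y : R) :=
  - (a1 * ((a2 - y) ^ 2 - (a1 - x) ^ 2) - 2 * a2 * (a1 - x) * (a2 - y)) / (Dn a1 a2 x y) ^ 2.
Definition kxx (a1 a2 x y : R) :=
  ((- 2 * a1 * (a1 - x) - 2 * a2 * (a2 - y)) * Dn a1 a2 x y
   - 4 * (a1 - x) * (a1 * ((a2 - y) ^ 2 - (a1 - x) ^ 2) - 2 * a2 * (a1 - x) * (a2 - y))) / (Dn a1 a2 x y) ^ 3.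
Definition ky (a1 a2 x y : R) :=
  - (a2 * ((a1 - x) ^ 2 - (a2 - y) ^ 2) - 2 * a1 * (a1 - x) * (a2 - y)) / (Dn a1 a2 x y) ^ 2.
Definition kyy (a1 a2 x y : R) :=
  ((- 2 * a2 * (a2 - y) - 2 * a1 * (a1 - x)) * Dn a1 a2 x y
   - 4 * (a2 - y) * (a2 * ((a1 - x) ^ 2 - (a2 - y) ^ 2) - 2 * a1 * (a1 - x) * (a2 - y))) / (Dn a1 a2 x y) ^ 3.

Lemma kk_dx a1 a2 x y : Dn a1 a2 x y <> 0 -> is_derive (fun s => kk a1 a2 s y) x (kx a1 a2 x y).
Proof.
  intros nz. unfold kk, kx, Dn in *. auto_derive.
  - exact nz.
  - field. exact nz.
Qed.

Lemma kx_dx a1 a2 x y : Dn a1 a2 x y <> 0 -> is_derive (fun s => kx a1 a2 s y) x (kxx a1 a2 x y).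
Proof. intros nz. unfold kxx, kx, Dn in *. auto_derive. - repeat split; intro E; apply nz; nra. - field. exact nz. Qed.

Lemma kk_dy a1 a2 x y : Dn a1 a2 x y <> 0 -> is_derive (fun s => kk a1 a2 x s) y (ky a1 a2 x y).
Proof. intros nz. unfold kk, ky, Dn in *. auto_derive. - repeat split; intro E; apply nz; nra. - field. exact nz. Qed.

Lemma ky_dy a1 a2 x y : Dn a1 a2 x y <> 0 -> is_derive (fun s => ky a1 a2 x s) y (kyy a1 a2 x y).
Proof. intros nz. unfold kyy, ky, Dn in *. auto_derive. - repeat split; intro E; apply nz; nra. - field. exact nz. Qed.

Lemma k_harm a1 a2 x y : Dn a1 a2 x y <> 0 -> kxx a1 a2 x y + kyy a1 a2 x y = 0.
Proof. intros nz. unfold kxx, kyy, Dn in *. field. exact nz. Qed.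

Definition nv (x y : R) := x ^ 2 + y ^ 2.
Definition vb (x y : R) := / nv x y.
Definition vbx (x y : R) := - 2 * x / (nv x y) ^ 2.
Definition vbxx (x y : R) := (6 * x ^ 2 - 2 * y ^ 2) / (nv x y) ^ 3.
Definition vby (x y : R) := - 2 * y / (nv x y) ^ 2.
Definition vbyy (x y : R) := (6 * y ^ 2 - 2 * x ^ 2) / (nv x y) ^ 3.

Lemma vb_dx x y : nv x y <> 0 -> is_derive (fun s => vb s y) x (vbx x y).
Proof. intros nz. unfold vb, vbx, nv in *. auto_derive. - repeat split; intro E; apply nz; nra. - field. exact nz. Qed.
Lemma vbx_dx x y : nv x y <> 0 -> is_derive (fun s => vbx s y) x (vbxx x y).
Proof. intros nz. unfold vbx, vbxx, nv in *. auto_derive. - repeat split; intro E; apply nz; nra. - field. exact nz. Qed.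
Lemma vb_dy x y : nv x y <> 0 -> is_derive (fun s => vb x s) y (vby x y).
Proof. intros nz. unfold vb, vby, nv in *. auto_derive. - repeat split; intro E; apply nz; nra. - field. exact nz. Qed.
Lemma vby_dy x y : nv x y <> 0 -> is_derive (fun s => vby x s) y (vbyy x y).
Proof. intros nz. unfold vby, vbyy, nv in *. auto_derive. - repeat split; intro E; apply nz; nra. - field. exact nz. Qed.
Lemma vb_lap x y : nv x y <> 0 -> vbxx x y + vbyy x y = 4 / (nv x y) ^ 2.
Proof. intros nz. unfold vbxx, vbyy, nv in *. field. exact nz. Qed.

Definition harmG (G : pt -> R) := forall q, in_B q -> exists d1 d2 e1 e2,
  (forall s, in_B (s, snd q) -> is_derive (fun s => G (s, snd q)) s (d1 s)) /\
  (forall s, in_B (fst q, s) -> is_derive (fun s => G (fst q, s)) s (d2 s)) /\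
  is_derive d1 (fst q) e1 /\ is_derive d2 (snd q) e2 /\ e1 + e2 = 0.

Lemma is_derive_sub (f g : R -> R) x a b : is_derive f x a -> is_derive g x b -> is_derive (fun s => f s - g s) x (a - b).
Proof. intros. apply (is_derive_minus f g x a b); auto. Qed.

Lemma wmp_bar (S : pt -> Prop) (G w : pt -> R) (wx wxx wy wyy : R -> R -> R) :
  closedS S -> boxS S -> (forall p, S p -> in_clB p) ->
  (forall p, in_clB p -> contR_at_in in_clB G p) -> (forall p, S p -> contR_at_in S w p) -> harmG G ->
  (forall p, S p -> w p <= G p \/ (in_B p /\ exists r, 0 < r /\
     (forall s, Rabs (s - fst p) < r -> S (s, snd p) /\ in_B (s, snd p) /\ is_derive (fun s => w (s, snd p)) s (wx s (snd p))) /\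
     (forall s, Rabs (s - snd p) < r -> S (fst p, s) /\ in_B (fst p, s) /\ is_derive (fun s => w (fst p, s)) s (wy (fst p) s)) /\
     is_derive (fun s => wx s (snd p)) (fst p) (wxx (fst p) (snd p)) /\
     is_derive (fun s => wy (fst p) s) (snd p) (wyy (fst p) (snd p)) /\
     0 < wxx (fst p) (snd p) + wyy (fst p) (snd p))) ->
  forall p, S p -> w p <= G p.
Proof.
  intros cS bS SC cG cw hG Hb p Sp.
  cut (w p - G p <= 0). lra.
  apply (wmp S (fun q => w q - G q)); auto.
  - intros q Sq. apply (cont_ext S (fun q => w q + -1 * G q)). intro; ring.
    apply cont_plus. auto. apply cont_scal. apply (cont_sub S in_clB); auto.
  - intros q Sq. destruct (Hb q Sq) as [h|[iB [r [hr [H1 [H2 [D1 [D2 pos]]]]]]]].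
    + left; lra.
    + right. destruct (hG q iB) as [g1 [g2 [f1 [f2 [G1 [G2 [F1 [F2 Fz]]]]]]]].
      exists r, (fun s => wx s (snd q) - g1 s), (fun s => wy (fst q) s - g2 s),
        (wxx (fst q) (snd q) - f1), (wyy (fst q) (snd q) - f2).
      split; auto. split; [|split; [|split; [|split]]].
      * intros s hs. destruct (H1 s hs) as [Ss [Bs Ds]]. split; auto.
        apply is_derive_sub; auto.
      * intros s hs. destruct (H2 s hs) as [Ss [Bs Ds]]. split; auto.
        apply is_derive_sub; auto.
      * apply is_derive_sub; auto.
      * apply is_derive_sub; auto.
      * lra.
Qed.

Definition ann (lo hi : R) (p : pt) := lo <= fst p ^ 2 + snd p ^ 2 <= hi.

Lemma cont_aff S c0 c1 c2 p : contR_at_in S (fun q => c0 + c1 * fst q + c2 * snd q) p.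
Proof. apply cont_plus. apply cont_plus. apply cont_const. apply cont_scal, cont_fst. apply cont_scal, cont_snd. Qed.

Lemma cont_nsq S p : contR_at_in S (fun q => fst q ^ 2 + snd q ^ 2) p.
Proof.
  apply (cont_ext S (fun q => fst q * fst q + snd q * snd q)). intro; ring.
  apply cont_plus; apply cont_mult; try apply cont_fst; apply cont_snd.
Qed.

Lemma closed_ann lo hi : closedS (ann lo hi).
Proof.
  intros p cl. unfold ann. apply NNPP. intro n.
  assert (Hn : fst p ^ 2 + snd p ^ 2 < lo \/ hi < fst p ^ 2 + snd p ^ 2) by lra.
  set (g := fst p ^ 2 + snd p ^ 2) in *.
  set (e := Rmax (lo - g) (g - hi)).
  assert (he : 0 < e) by (unfold e; destruct Hn; [eapply Rlt_le_trans; [|apply Rmax_l] | eapply Rlt_le_trans; [|apply Rmax_r]]; lra).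
  destruct (cont_nsq (fun _ => True) p e he) as [d [hd Hd]].
  destruct (cl d hd) as [q [[h1 h2] hq]].
  specialize (Hd q I hq). apply Rabs_def2 in Hd. fold g in Hd.
  unfold e in *. destruct Hn.
  - pose proof (Rmax_l (lo - g) (g - hi)). unfold Rmax in *. destruct Rle_dec; lra.
  - pose proof (Rmax_r (lo - g) (g - hi)). unfold Rmax in *. destruct Rle_dec; lra.
Qed.

Lemma closed_clB : closedS in_clB.
Proof.
  intros p cl. assert (ann 0 1 p).
  { apply closed_ann. apply (closure_mono in_clB); auto. intros x hx. unfold ann, in_clB in *. pose proof (pow2_ge_0 (fst x)); pose proof (pow2_ge_0 (snd x)); lra. }
  unfold ann, in_clB in *. lra.
Qed.

Lemma box_ann lo : boxS (ann lo 1).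
Proof. intros p h. unfold ann in h. pose proof (pow2_ge_0 (fst p)); pose proof (pow2_ge_0 (snd p)). split; split; nra. Qed.

Lemma box_clB : boxS in_clB.
Proof. intros p h. unfold in_clB in h. pose proof (pow2_ge_0 (fst p)); pose proof (pow2_ge_0 (snd p)). split; split; nra. Qed.

Lemma slice_sq q1 s r : Rabs q1 <= 1 -> 0 < r <= 1 -> Rabs (s - q1) < r -> Rabs (s ^ 2 - q1 ^ 2) < 3 * r.
Proof.
  intros h1 hr hs. replace (s ^ 2 - q1 ^ 2) with ((s - q1) * ((s - q1) + 2 * q1)) by ring.
  rewrite Rabs_mult. pose proof (Rabs_triang (s - q1) (2 * q1)). rewrite Rabs_mult, (Rabs_right 2) in H by lra.
  pose proof (Rabs_pos (s - q1)). pose proof (Rabs_pos (s - q1 + 2 * q1)).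
  assert (Rabs (s - q1 + 2 * q1) <= 3) by lra.
  assert (Rabs (s - q1) * Rabs (s - q1 + 2 * q1) <= Rabs (s - q1) * 3) by (apply Rmult_le_compat_l; lra). lra.
Qed.

Lemma abs_le1 x y : x ^ 2 + y ^ 2 <= 1 -> Rabs x <= 1.
Proof. intros. apply Rabs_le. split; nra. Qed.

Lemma sqrt_ge_sq x k : 0 <= x -> 0 <= k -> k <= sqrt x -> k ^ 2 <= x.
Proof.
  intros hx0 hk h. destruct (Rle_or_lt x 0) as [hx|hx].
  - assert (x = 0) by lra. subst. rewrite sqrt_0 in h. assert (k = 0) by lra. subst. lra.
  - assert (k * k <= sqrt x * sqrt x) by (apply Rmult_le_compat; lra).
    rewrite sqrt_sqrt in H by lra. nra.
Qed.

Ltac rwD K := match type of K with is_derive _ ?x ?l => match goal with |- context [Derive ?g x] =>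
  replace (Derive g x) with l by (symmetry; apply is_derive_unique; exact K) end end.

Definition w1f (a1 a2 c1 c2 : R) (p : pt) := c1 * (2 * kk a1 a2 (fst p) (snd p) - 1 - 1/6) + c2 * (fst p ^ 2 + snd p ^ 2 - 1).
Definition w1x (a1 a2 c1 c2 x y : R) := c1 * (2 * kx a1 a2 x y) + c2 * (2 * x).
Definition w1xx (a1 a2 c1 c2 x y : R) := c1 * (2 * kxx a1 a2 x y) + c2 * 2.
Definition w1y (a1 a2 c1 c2 x y : R) := c1 * (2 * ky a1 a2 x y) + c2 * (2 * y).
Definition w1yy (a1 a2 c1 c2 x y : R) := c1 * (2 * kyy a1 a2 x y) + c2 * 2.

Lemma w1_dx a1 a2 c1 c2 x y : Dn a1 a2 x y <> 0 -> is_derive (fun s => w1f a1 a2 c1 c2 (s, y)) x (w1x a1 a2 c1 c2 x y).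
Proof.
  intros nz. unfold w1f, w1x. cbn [fst snd].
  pose proof (kk_dx a1 a2 x y nz) as K.
  auto_derive. - eexists; exact K.
  - rwD K. ring.
Qed.

Lemma w1_dxx a1 a2 c1 c2 x y : Dn a1 a2 x y <> 0 -> is_derive (fun s => w1x a1 a2 c1 c2 s y) x (w1xx a1 a2 c1 c2 x y).
Proof.
  intros nz. unfold w1x, w1xx. pose proof (kx_dx a1 a2 x y nz) as K.
  auto_derive. - eexists; exact K.
  - rwD K. ring.
Qed.

Lemma w1_dy a1 a2 c1 c2 x y : Dn a1 a2 x y <> 0 -> is_derive (fun s => w1f a1 a2 c1 c2 (x, s)) y (w1y a1 a2 c1 c2 x y).
Proof.
  intros nz. unfold w1f, w1y. cbn [fst snd].
  pose proof (kk_dy a1 a2 x y nz) as K.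
  auto_derive. - eexists; exact K.
  - rwD K. ring.
Qed.

Lemma w1_dyy a1 a2 c1 c2 x y : Dn a1 a2 x y <> 0 -> is_derive (fun s => w1y a1 a2 c1 c2 x s) y (w1yy a1 a2 c1 c2 x y).
Proof.
  intros nz. unfold w1y, w1yy. pose proof (ky_dy a1 a2 x y nz) as K.
  auto_derive. - eexists; exact K.
  - rwD K. ring.
Qed.

Lemma w1_lap a1 a2 c1 c2 x y : Dn a1 a2 x y <> 0 -> w1xx a1 a2 c1 c2 x y + w1yy a1 a2 c1 c2 x y = 4 * c2.
Proof. intros nz. unfold w1xx, w1yy. pose proof (k_harm a1 a2 x y nz). nra. Qed.

Definition w2f (b : R) (p : pt) := b * (vb (fst p) (snd p) - 1).
Definition w2x (b x y : R) := b * vbx x y.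
Definition w2xx (b x y : R) := b * vbxx x y.
Definition w2y (b x y : R) := b * vby x y.
Definition w2yy (b x y : R) := b * vbyy x y.

Lemma w2_dx b x y : nv x y <> 0 -> is_derive (fun s => w2f b (s, y)) x (w2x b x y).
Proof.
  intros nz. unfold w2f, w2x. cbn [fst snd]. pose proof (vb_dx x y nz) as K.
  auto_derive. - eexists; exact K. - rwD K. ring.
Qed.
Lemma w2_dxx b x y : nv x y <> 0 -> is_derive (fun s => w2x b s y) x (w2xx b x y).
Proof.
  intros nz. unfold w2x, w2xx. pose proof (vbx_dx x y nz) as K.
  auto_derive. - eexists; exact K. - rwD K. ring.
Qed.
Lemma w2_dy b x y : nv x y <> 0 -> is_derive (fun s => w2f b (x, s)) y (w2y b x y).
Proof.
  intros nz. unfold w2f, w2y. cbn [fst snd]. pose proof (vb_dy x y nz) as K.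
  auto_derive. - eexists; exact K. - rwD K. ring.
Qed.
Lemma w2_dyy b x y : nv x y <> 0 -> is_derive (fun s => w2y b x s) y (w2yy b x y).
Proof.
  intros nz. unfold w2y, w2yy. pose proof (vby_dy x y nz) as K.
  auto_derive. - eexists; exact K. - rwD K. ring.
Qed.
Lemma w2_lap b x y : nv x y <> 0 -> w2xx b x y + w2yy b x y = 4 * b / (nv x y) ^ 2.
Proof. intros nz. unfold w2xx, w2yy. rewrite <- Rmult_plus_distr_l, vb_lap by auto. field; first [exact nz | apply pow_nonzero; exact nz]. Qed.

Lemma cont_w1 S a1 a2 c1 c2 p : Dn a1 a2 (fst p) (snd p) <> 0 -> contR_at_in S (w1f a1 a2 c1 c2) p.
Proof.
  intros nz. unfold w1f, kk.
  apply cont_plus; apply cont_scal.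
  - apply (cont_ext S (fun q => 2 * ((a1 * a1 + a2 * a2 + (- a1) * fst q + (- a2) * snd q) * / ((a1 * a1 + a2 * a2 + (-2 * a1) * fst q + (-2 * a2) * snd q) + (fst q * fst q + snd q * snd q))) + - (1 + 1/6))).
    { intro q. unfold Dn, Rdiv.
      replace (a1 * a1 + a2 * a2 + -2 * a1 * fst q + -2 * a2 * snd q + (fst q * fst q + snd q * snd q))
        with ((a1 - fst q) ^ 2 + (a2 - snd q) ^ 2) by ring. ring. }
    apply cont_plus; [|apply cont_const]. apply cont_scal. apply cont_mult. apply cont_aff.
    apply cont_inv. unfold Dn in nz. intro E; apply nz. rewrite <- E. ring.
    apply cont_plus. apply cont_aff. apply cont_plus; apply cont_mult; try apply cont_fst; apply cont_snd.
  - apply (cont_ext S (fun q => (fst q ^ 2 + snd q ^ 2) + -1)). intro; ring.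
    apply cont_plus. apply cont_nsq. apply cont_const.
Qed.

Lemma cont_w2 S b p : nv (fst p) (snd p) <> 0 -> contR_at_in S (w2f b) p.
Proof.
  intros nz. unfold w2f, vb, nv. apply cont_scal.
  apply (cont_ext S (fun q => / (fst q ^ 2 + snd q ^ 2) + -1)). intro; ring.
  apply cont_plus; [|apply cont_const]. apply cont_inv. auto. apply cont_nsq.
Qed.


Lemma Dform e1 e2 s x1 x2 : e1 ^ 2 + e2 ^ 2 = 1 ->
  Dn ((1 + s) * e1) ((1 + s) * e2) x1 x2 = s ^ 2 + s * (1 - (x1 ^ 2 + x2 ^ 2)) + (1 + s) * ((e1 - x1) ^ 2 + (e2 - x2) ^ 2).
Proof.
  intros he. unfold Dn.
  assert (E : ((1 + s) * e1 - x1) ^ 2 + ((1 + s) * e2 - x2) ^ 2 -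
     (s ^ 2 + s * (1 - (x1 ^ 2 + x2 ^ 2)) + (1 + s) * ((e1 - x1) ^ 2 + (e2 - x2) ^ 2)) = s * (1 + s) * (e1 ^ 2 + e2 ^ 2 - 1)) by ring.
  rewrite he in E. lra.
Qed.

Lemma hform e1 e2 s x1 x2 : e1 ^ 2 + e2 ^ 2 = 1 -> Dn ((1 + s) * e1) ((1 + s) * e2) x1 x2 <> 0 ->
  (2 * kk ((1 + s) * e1) ((1 + s) * e2) x1 x2 - 1) * Dn ((1 + s) * e1) ((1 + s) * e2) x1 x2 = (1 + s) ^ 2 - (x1 ^ 2 + x2 ^ 2).
Proof.
  intros he nz. unfold kk. field_simplify; auto. unfold Dn.
  assert (E : 2 * ((1 + s) * e1 * ((1 + s) * e1 - x1) + (1 + s) * e2 * ((1 + s) * e2 - x2)) - (((1 + s) * e1 - x1) ^ 2 + ((1 + s) * e2 - x2) ^ 2)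
     - ((1 + s) ^ 2 - (x1 ^ 2 + x2 ^ 2)) = (1 + s) ^ 2 * (e1 ^ 2 + e2 ^ 2 - 1)) by ring.
  rewrite he in E. lra.
Qed.

Lemma hopf (G : pt -> R) e1 e2 :
  (forall p, in_clB p -> contR_at_in in_clB G p) -> harmG G -> (forall p, on_circle p -> 0 <= G p) ->
  e1 ^ 2 + e2 ^ 2 = 1 -> 0 < G (e1, e2) ->
  exists b, 0 < b /\ forall p1 p2 r, p1 ^ 2 + p2 ^ 2 = 1 -> 1/2 <= r <= 1 -> b * (/ r ^ 2 - 1) <= G (r * p1, r * p2).
Proof.
  intros cG hG G0 he Gpos.
  pose (dl := G (e1, e2) / 2). assert (hdl : 0 < dl) by (unfold dl; lra).
  assert (ce : in_clB (e1, e2)) by (unfold in_clB; simpl; lra).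
  destruct (cG _ ce dl hdl) as [k0 [hk0 Hk0]].
  pose (ka := Rmin k0 1).
  assert (hka : 0 < ka <= 1 /\ ka <= k0) by (unfold ka; split; [split; [apply Rmin_pos; lra | apply Rmin_r] | apply Rmin_l]).
  clearbody ka. destruct hka as [[hka hka1] hka2].
  pose (s := ka ^ 2 / 18). assert (hs : 0 < s <= 1 / 18) by (unfold s; split; [apply Rdiv_lt_0_compat; nra | nra]).
  assert (eks : ka ^ 2 = 18 * s) by (unfold s; field). clearbody s.
  pose (a1 := (1 + s) * e1). pose (a2 := (1 + s) * e2).
  pose (c1 := dl * s / 3). assert (hc1 : 0 < c1) by (unfold c1; apply Rdiv_lt_0_compat; nra).
  pose (c2 := c1 / 12). assert (hc2 : 0 < c2) by (unfold c2; lra).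
  assert (Dpos : forall x1 x2, x1 ^ 2 + x2 ^ 2 <= 1 -> s ^ 2 <= Dn a1 a2 x1 x2).
  { intros x1 x2 hx. unfold a1, a2. rewrite Dform by auto.
    assert (0 <= s * (1 - (x1 ^ 2 + x2 ^ 2))) by (apply Rmult_le_pos; lra).
    assert (0 <= (1 + s) * ((e1 - x1) ^ 2 + (e2 - x2) ^ 2)).
    { apply Rmult_le_pos. lra. pose proof (pow2_ge_0 (e1 - x1)); pose proof (pow2_ge_0 (e2 - x2)); lra. }
    lra. }
  assert (Dnz : forall x1 x2, x1 ^ 2 + x2 ^ 2 <= 1 -> Dn a1 a2 x1 x2 <> 0).
  { intros x1 x2 hx. pose proof (Dpos x1 x2 hx). assert (0 < s ^ 2) by nra. lra. }
  assert (St1 : forall p, in_clB p -> w1f a1 a2 c1 c2 p <= G p).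
  { apply (wmp_bar in_clB G (w1f a1 a2 c1 c2) (w1x a1 a2 c1 c2) (w1xx a1 a2 c1 c2) (w1y a1 a2 c1 c2) (w1yy a1 a2 c1 c2));
      auto using closed_clB, box_clB.
    - intros p hp. apply cont_w1. apply Dnz. exact hp.
    - intros [p1 p2] hp. unfold in_clB in hp; cbn [fst snd] in *.
      destruct (Rle_lt_or_eq_dec _ _ hp) as [hlt|heq].
      + right. split. exact hlt.
        exists (Rmin 1 ((1 - (p1 ^ 2 + p2 ^ 2)) / 4)).
        assert (hr : 0 < Rmin 1 ((1 - (p1 ^ 2 + p2 ^ 2)) / 4) <= 1).
        { split. apply Rmin_pos; lra. apply Rmin_l. }
        pose proof (Rmin_r 1 ((1 - (p1 ^ 2 + p2 ^ 2)) / 4)).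
        set (r := Rmin 1 ((1 - (p1 ^ 2 + p2 ^ 2)) / 4)) in *. clearbody r.
        assert (b1 : Rabs p1 <= 1) by (apply (abs_le1 p1 p2); lra).
        assert (b2 : Rabs p2 <= 1) by (apply (abs_le1 p2 p1); lra).
        split. lra. split; [|split; [|split; [|split]]].
        * intros x hx. pose proof (slice_sq p1 x r b1 hr hx) as Q. apply Rabs_def2 in Q.
          assert (ib : in_B (x, p2)) by (unfold in_B; simpl; lra).
          split. apply in_B_clB; auto. split; auto.
          apply w1_dx. apply Dnz. unfold in_B in ib; simpl in ib; lra.
        * intros x hx. pose proof (slice_sq p2 x r b2 hr hx) as Q. apply Rabs_def2 in Q.
          assert (ib : in_B (p1, x)) by (unfold in_B; simpl; lra).
          split. apply in_B_clB; auto. split; auto.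
          apply w1_dy. apply Dnz. unfold in_B in ib; simpl in ib; lra.
        * apply w1_dxx. apply Dnz; lra.
        * apply w1_dyy. apply Dnz; lra.
        * rewrite w1_lap by (apply Dnz; lra). lra.
      + left. unfold w1f. cbn [fst snd]. rewrite heq.
        assert (hD := Dpos p1 p2 hp). assert (nz := Dnz p1 p2 hp).
        pose proof (hform e1 e2 s p1 p2 he nz) as Hf. fold a1 a2 in Hf. rewrite heq in Hf.
        set (h := 2 * kk a1 a2 p1 p2 - 1) in *. set (D := Dn a1 a2 p1 p2) in *.
        assert (hDp : 0 < D) by nra.
        assert (hh0 : 0 <= h). { apply (Rmult_le_reg_r D); auto. rewrite Hf. nra. }
        destruct (Rlt_or_le (dist2 (e1, e2) (p1, p2)) ka) as [near|far].
        * assert (Gp : dl < G (p1, p2)).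
          { specialize (Hk0 (p1, p2) hp ltac:(lra)). apply Rabs_def2 in Hk0. unfold dl in *. lra. }
          assert (s * h <= 3).
          { apply (Rmult_le_reg_r D); auto. rewrite Rmult_assoc, Hf. nra. }
          assert (c1 * h <= dl).
          { unfold c1. replace (dl * s / 3 * h) with (dl * (s * h) / 3) by field.
            assert (dl * (s * h) <= dl * 3) by (apply Rmult_le_compat_l; lra). lra. }
          assert (0 <= c1 * (1/6)) by lra. nra.
        * assert (hfar : ka ^ 2 <= (e1 - p1) ^ 2 + (e2 - p2) ^ 2).
          { apply sqrt_ge_sq. pose proof (pow2_ge_0 (e1 - p1)); pose proof (pow2_ge_0 (e2 - p2)); lra. lra. unfold dist2 in far. simpl in far. 
            replace ((e1 - p1) ^ 2 + (e2 - p2) ^ 2) with ((e1 - p1) * ((e1 - p1) * 1) + (e2 - p2) * ((e2 - p2) * 1)) by ring. exact far. }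
          assert (hDk : ka ^ 2 <= D).
          { unfold D, a1, a2. rewrite Dform by auto. rewrite heq.
            assert (ka ^ 2 <= (1 + s) * ((e1 - p1) ^ 2 + (e2 - p2) ^ 2)) by nra. nra. }
          assert (h <= 1/6).
          { apply (Rmult_le_reg_r D); auto. rewrite Hf. rewrite eks in hDk. nra. }
          assert (c1 * (h - 1/6) <= 0) by nra.
          assert (0 <= G (p1, p2)) by (apply G0; unfold on_circle; simpl; lra). lra. }
  pose (m := c1 / 12).
  assert (St1b : forall p, fst p ^ 2 + snd p ^ 2 = 1/4 -> m <= G p).
  { intros [p1 p2] hp. cbn [fst snd] in hp.
    assert (cp : in_clB (p1, p2)) by (unfold in_clB; simpl; lra).
    eapply Rle_trans; [|apply St1; auto]. unfold w1f. cbn [fst snd]. rewrite hp.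
    assert (nz := Dnz p1 p2 ltac:(lra)). assert (hD := Dpos p1 p2 ltac:(lra)).
    pose proof (hform e1 e2 s p1 p2 he nz) as Hf. fold a1 a2 in Hf. rewrite hp in Hf.
    set (h := 2 * kk a1 a2 p1 p2 - 1) in *. set (D := Dn a1 a2 p1 p2) in *.
    assert (hDp : 0 < D) by nra.
    assert (hDu : D <= (1 + s) ^ 2 + (1 + s) + 1/4).
    { unfold D, Dn, a1, a2.
      assert (0 <= (e1 + 2 * p1) ^ 2 + (e2 + 2 * p2) ^ 2) by (pose proof (pow2_ge_0 (e1 + 2 * p1)); pose proof (pow2_ge_0 (e2 + 2 * p2)); lra).
      assert (E0 : (e1 + 2 * p1) ^ 2 + (e2 + 2 * p2) ^ 2 = (e1 ^ 2 + e2 ^ 2) + 4 * (e1 * p1 + e2 * p2) + 4 * (p1 ^ 2 + p2 ^ 2)) by ring.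
      rewrite he, hp in E0.
      assert (e1 * p1 + e2 * p2 >= - 1/2) by lra.
      assert (E : ((1 + s) * e1 - p1) ^ 2 + ((1 + s) * e2 - p2) ^ 2 = (1 + s) ^ 2 * (e1 ^ 2 + e2 ^ 2) - 2 * (1 + s) * (e1 * p1 + e2 * p2) + (p1 ^ 2 + p2 ^ 2)) by ring.
      rewrite E, he, hp. nra. }
    assert (1/3 <= h).
    { apply (Rmult_le_reg_r D); auto. rewrite Hf. nra. }
    unfold m, c2. nra. }
  pose (b := m / 3). exists b. split. unfold b, m; lra.
  assert (St2 : forall p, ann (1/4) 1 p -> w2f b p <= G p).
  { apply (wmp_bar (ann (1/4) 1) G (w2f b) (w2x b) (w2xx b) (w2y b) (w2yy b)); auto using closed_ann, box_ann.
    - intros p hp. unfold ann, in_clB in *. lra.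
    - intros p hp. apply cont_w2. unfold ann, nv in *. lra.
    - intros [p1 p2] hp. unfold ann in hp; cbn [fst snd] in *.
      destruct hp as [hlo hhi].
      destruct (Rle_lt_or_eq_dec _ _ hhi) as [hlt|heq].
      + destruct (Rle_lt_or_eq_dec _ _ hlo) as [hlt2|heq2].
        * right. split. exact hlt.
          pose (gap := Rmin (1 - (p1 ^ 2 + p2 ^ 2)) ((p1 ^ 2 + p2 ^ 2) - 1/4)).
          assert (hg : 0 < gap /\ gap <= 1 - (p1 ^ 2 + p2 ^ 2) /\ gap <= (p1 ^ 2 + p2 ^ 2) - 1/4).
          { unfold gap. split. apply Rmin_pos; lra. split. apply Rmin_l. apply Rmin_r. }
          clearbody gap.
          exists (Rmin 1 (gap / 4)).
          assert (hr : 0 < Rmin 1 (gap / 4) <= 1).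
          { split. apply Rmin_pos; lra. apply Rmin_l. }
          pose proof (Rmin_r 1 (gap / 4)).
          set (r := Rmin 1 (gap / 4)) in *. clearbody r.
          assert (b1 : Rabs p1 <= 1) by (apply (abs_le1 p1 p2); lra).
          assert (b2 : Rabs p2 <= 1) by (apply (abs_le1 p2 p1); lra).
          split. lra. split; [|split; [|split; [|split]]].
          -- intros x hx. pose proof (slice_sq p1 x r b1 hr hx) as Q. apply Rabs_def2 in Q.
             split. unfold ann; simpl; lra. split. unfold in_B; simpl; lra.
             apply w2_dx. unfold nv. lra.
          -- intros x hx. pose proof (slice_sq p2 x r b2 hr hx) as Q. apply Rabs_def2 in Q.
             split. unfold ann; simpl; lra. split. unfold in_B; simpl; lra.
             apply w2_dy. unfold nv. lra.
          -- apply w2_dxx. unfold nv. lra.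
          -- apply w2_dyy. unfold nv. lra.
          -- rewrite w2_lap by (unfold nv; lra). unfold nv.
             apply Rdiv_lt_0_compat. unfold b, m; lra. apply pow_lt. lra.
        * left. unfold w2f, vb, nv. cbn [fst snd]. rewrite <- heq2.
          pose proof (St1b (p1, p2) ltac:(simpl; lra)). unfold b.
          replace (/ (1/4)) with 4 by field. lra.
      + left. unfold w2f, vb, nv. cbn [fst snd]. rewrite heq. rewrite Rinv_1.
        replace (b * (1 - 1)) with 0 by ring. apply G0. unfold on_circle; simpl; lra. }
  intros p1 p2 r hp hr.
  assert (A : ann (1/4) 1 (r * p1, r * p2)).
  { unfold ann; cbn [fst snd]. replace ((r * p1) ^ 2 + (r * p2) ^ 2) with (r ^ 2 * (p1 ^ 2 + p2 ^ 2)) by ring.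
    rewrite hp. nra. }
  specialize (St2 _ A). unfold w2f, vb, nv in St2. cbn [fst snd] in St2.
  replace ((r * p1) ^ 2 + (r * p2) ^ 2) with (r ^ 2) in St2 by (replace ((r * p1) ^ 2 + (r * p2) ^ 2) with (r ^ 2 * (p1 ^ 2 + p2 ^ 2)) by ring; rewrite hp; ring).
  exact St2.
Qed.

Lemma angle x y : x ^ 2 + y ^ 2 = 1 -> exists t, x = cos t /\ y = sin t.
Proof.
  intros h. assert (hx : -1 <= x <= 1) by (split; nra).
  assert (E : sqrt (1 - x²) = Rabs y).
  { rewrite <- sqrt_Rsqr_abs. f_equal. unfold Rsqr. nra. }
  destruct (Rle_or_lt 0 y) as [hy|hy].
  - exists (acos x). rewrite cos_acos, sin_acos by auto. rewrite E, Rabs_right; lra.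
  - exists (- acos x). rewrite cos_neg, sin_neg, cos_acos, sin_acos by auto. rewrite E, Rabs_left; lra.
Qed.

Lemma lin_der (f g : R -> R) x a b c1 c2 k1 k2 : is_derive f x a -> is_derive g x b ->
  is_derive (fun s => c1 * (f s - k1) + c2 * (g s - k2)) x (c1 * a + c2 * b).
Proof.
  intros Df Dg. auto_derive.
  - split. eexists; exact Df. split. eexists; exact Dg. auto.
  - rwD Df. rwD Dg. ring.
Qed.

Lemma lin_der0 (f g : R -> R) x a b c1 c2 : is_derive f x a -> is_derive g x b ->
  is_derive (fun s => c1 * f s + c2 * g s) x (c1 * a + c2 * b).
Proof.
  intros Df Dg. auto_derive.
  - split. eexists; exact Df. split. eexists; exact Dg. auto.
  - rwD Df. rwD Dg. ring.
Qed.

Lemma cont_fstF S F p : cont_on S F -> S p -> contR_at_in S (fun q => fst (F q)) p.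
Proof.
  intros C Sp e he. destruct (C p Sp e he) as [d [hd H]]. exists d; split; auto.
  intros q Sq hq. specialize (H q Sq hq). pose proof (dist2_fst (F q) (F p)). lra.
Qed.

Lemma cont_sndF S F p : cont_on S F -> S p -> contR_at_in S (fun q => snd (F q)) p.
Proof.
  intros C Sp e he. destruct (C p Sp e he) as [d [hd H]]. exists d; split; auto.
  intros q Sq hq. specialize (H q Sq hq). pose proof (dist2_snd (F q) (F p)). lra.
Qed.

Lemma cont_lin S f g c1 c2 k1 k2 p : contR_at_in S f p -> contR_at_in S g p ->
  contR_at_in S (fun q => c1 * (f q - k1) + c2 * (g q - k2)) p.
Proof.
  intros Cf Cg. apply (cont_ext S (fun q => c1 * (f q + - k1) + c2 * (g q + - k2))). intro; ring.
  apply cont_plus; apply cont_scal; apply cont_plus; auto; apply cont_const.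
Qed.

Lemma cont_lin0 S f g c1 c2 p : contR_at_in S f p -> contR_at_in S g p ->
  contR_at_in S (fun q => c1 * f q + c2 * g q) p.
Proof.
  intros Cf Cg. apply cont_plus; apply cont_scal; auto.
Qed.

Lemma reg_lin f fx fy g gx gy c1 c2 k1 k2 : reg f fx fy -> reg g gx gy ->
  reg (fun q => c1 * (f q - k1) + c2 * (g q - k2)) (fun q => c1 * fx q + c2 * gx q) (fun q => c1 * fy q + c2 * gy q).
Proof.
  intros [Df Cf] [Dg Cg]. split.
  - intros q hq. destruct (Df q hq) as [f1 f2]. destruct (Dg q hq) as [g1 g2].
    split; apply lin_der; auto.
  - intros q hq. destruct (Cf q hq) as [a1 [a2 a3]]. destruct (Cg q hq) as [b1 [b2 b3]].
    split; [|split]. apply cont_lin; auto. apply cont_lin0; auto. apply cont_lin0; auto.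
Qed.

Theorem lemma5p3 (Phi : pt -> pt) (D : pt -> Prop) (U : pt -> pt)
    (Ux Uy : pt -> pt) :
  C1_diffeo_circle Phi ->
  is_domain D -> is_bounded D ->
  (forall p, boundary D p <-> image_circle Phi p) ->
  orientation_preserving Phi D ->
  (* U in C^2(B) \cap C(closed B), harmonic, boundary values Phi *)
  C2_on_B (fun p => fst (U p)) -> C2_on_B (fun p => snd (U p)) ->
  cont_on in_clB U ->
  (forall p, in_B p -> laplacian (fun q => fst (U q)) p = 0 /\
                       laplacian (fun q => snd (U q)) p = 0) ->
  (forall p, on_circle p -> U p = Phi p) ->
  (* U in C^1(closed B): Ux, Uy are the continuous extensions to the
     closed disk of the partial derivatives dU/dx, dU/dy *)
  (forall p, in_B p ->
     Ux p = (px (fun q => fst (U q)) p, px (fun q => snd (U q)) p) /\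
     Uy p = (py (fun q => fst (U q)) p, py (fun q => snd (U q)) p)) ->
  cont_on in_clB Ux -> cont_on in_clB Uy ->
  forall p, on_circle p -> gamma_c D (Phi p) ->
    fst (Ux p) * snd (Uy p) - fst (Uy p) * snd (Ux p) > 0.
Proof.
  intros H1 H2 H3 H4 H5 H6 H7 H8 H9 H10 H11 H12 H13 [p1 p2] hp hg.
  unfold on_circle in hp; cbn [fst snd] in hp.
  destruct (angle p1 p2 hp) as [t [-> ->]].
  pose proof (phi_pair Phi t) as EP.
  destruct hg as [_ [_ nint]]. rewrite EP in nint.
  pose proof (support Phi D t H1 (proj1 H2) H4 H5 nint) as Sup.
  assert (hT : 0 < Derive (phi1 Phi) t ^ 2 + Derive (phi2 Phi) t ^ 2).
  { destruct H1 as [_ [_ [Nz _]]]. specialize (Nz t).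
    destruct (Req_dec (Derive (phi1 Phi) t) 0) as [e1|e1]; destruct (Req_dec (Derive (phi2 Phi) t) 0) as [e2|e2].
    - exfalso. apply Nz. rewrite e1, e2. auto.
    - assert (0 < Derive (phi2 Phi) t ^ 2) by (apply pow2_gt_0; auto). pose proof (pow2_ge_0 (Derive (phi1 Phi) t)). lra.
    - assert (0 < Derive (phi1 Phi) t ^ 2) by (apply pow2_gt_0; auto). pose proof (pow2_ge_0 (Derive (phi2 Phi) t)). lra.
    - assert (0 < Derive (phi1 Phi) t ^ 2) by (apply pow2_gt_0; auto). pose proof (pow2_ge_0 (Derive (phi2 Phi) t)). lra. }
  destruct (nondeg Phi (Derive (phi1 Phi) t) (Derive (phi2 Phi) t) (phi1 Phi t) (phi2 Phi t) H1 hT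
     (fun th => Sup _ (curve_bd Phi D th H4))) as [th Hth].
  set (z1 := phi1 Phi t) in *. set (z2 := phi2 Phi t) in *.
  set (t1 := Derive (phi1 Phi) t) in *. set (t2 := Derive (phi2 Phi) t) in *.
  cbn [fst snd] in Sup.
  set (U1 := fun q => fst (U q)). set (U2 := fun q => snd (U q)).
  set (G := fun q => - t2 * (U1 q - z1) + t1 * (U2 q - z2)).
  assert (cG : forall q, in_clB q -> contR_at_in in_clB G q).
  { intros q hq. apply cont_lin. apply cont_fstF; auto. apply cont_sndF; auto. }
  assert (hG : harmG G).
  { intros [q1 q2] hq. cbn [fst snd].
    destruct (H6 (q1, q2) hq) as [_ [_ [exx1 [_ [_ [eyy1 _]]]]]].
    destruct (H7 (q1, q2) hq) as [_ [_ [exx2 [_ [_ [eyy2 _]]]]]].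
    exists (fun s => - t2 * px U1 (s, q2) + t1 * px U2 (s, q2)),
           (fun s => - t2 * py U1 (q1, s) + t1 * py U2 (q1, s)),
           (- t2 * px (px U1) (q1, q2) + t1 * px (px U2) (q1, q2)),
           (- t2 * py (py U1) (q1, q2) + t1 * py (py U2) (q1, q2)).
    split; [|split; [|split; [|split]]].
    - intros s hs. destruct (H6 _ hs) as [a1 _]. destruct (H7 _ hs) as [a2 _].
      apply lin_der. exact (Derive_correct _ _ a1). exact (Derive_correct _ _ a2).
    - intros s hs. destruct (H6 _ hs) as [_ [a1 _]]. destruct (H7 _ hs) as [_ [a2 _]].
      apply lin_der. exact (Derive_correct _ _ a1). exact (Derive_correct _ _ a2).
    - apply lin_der0. exact (Derive_correct _ _ exx1). exact (Derive_correct _ _ exx2).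
    - apply lin_der0. exact (Derive_correct _ _ eyy1). exact (Derive_correct _ _ eyy2).
    - destruct (H9 _ hq) as [L1 L2]. unfold laplacian in L1, L2. fold U1 in L1. fold U2 in L2.
      replace (- t2 * px (px U1) (q1, q2) + t1 * px (px U2) (q1, q2) + (- t2 * py (py U1) (q1, q2) + t1 * py (py U2) (q1, q2)))
        with (- t2 * (px (px U1) (q1, q2) + py (py U1) (q1, q2)) + t1 * (px (px U2) (q1, q2) + py (py U2) (q1, q2))) by ring.
      rewrite L1, L2. ring. }
  assert (G0 : forall q, on_circle q -> 0 <= G q).
  { intros q hq. unfold G, U1, U2. rewrite (H10 q hq).
    assert (bq : boundary D (Phi q)) by (apply H4; exists q; auto).
    specialize (Sup _ bq). lra. }
  assert (Geta : 0 < G (cos th, sin th)).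
  { unfold G, U1, U2. rewrite (H10 _ (on_circle_cs th)), phi_pair. cbn [fst snd]. lra. }
  destruct (hopf G (cos th) (sin th) cG hG G0 (circ_id th) Geta) as [b [hb Hb]].
  assert (R1 : reg U1 (fun q => fst (Ux q)) (fun q => fst (Uy q))).
  { split.
    - intros q hq. destruct (H11 q hq) as [E1 E2]. rewrite E1, E2. cbn [fst snd].
      destruct (H6 q hq) as [a1 [a2 _]]. split. exact (Derive_correct _ _ a1). exact (Derive_correct _ _ a2).
    - intros q hq. split; [|split]. apply cont_fstF; auto. apply cont_fstF; auto. apply cont_fstF; auto. }
  assert (R2 : reg U2 (fun q => snd (Ux q)) (fun q => snd (Uy q))).
  { split.
    - intros q hq. destruct (H11 q hq) as [E1 E2]. rewrite E1, E2. cbn [fst snd].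
      destruct (H7 q hq) as [a1 [a2 _]]. split. exact (Derive_correct _ _ a1). exact (Derive_correct _ _ a2).
    - intros q hq. split; [|split]. apply cont_sndF; auto. apply cont_sndF; auto. apply cont_sndF; auto. }
  pose proof (reg_lin _ _ _ _ _ _ (- t2) t1 z1 z2 R1 R2) as RG. fold G in RG.
  destruct H1 as [Dif _]. destruct (Dif t) as [ex1 ex2].
  assert (T1 : t1 = - sin t * fst (Ux (cos t, sin t)) + cos t * fst (Uy (cos t, sin t))).
  { apply (tangent U1 _ _ t t1 R1).
    apply (is_derive_ext (phi1 Phi)). intro s. unfold U1, phi1. rewrite (H10 _ (on_circle_cs s)). auto.
    exact (Derive_correct _ _ ex1). }
  assert (T2 : t2 = - sin t * snd (Ux (cos t, sin t)) + cos t * snd (Uy (cos t, sin t))).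
  { apply (tangent U2 _ _ t t2 R2).
    apply (is_derive_ext (phi2 Phi)). intro s. unfold U2, phi2. rewrite (H10 _ (on_circle_cs s)). auto.
    exact (Derive_correct _ _ ex2). }
  set (a1 := fst (Ux (cos t, sin t))) in *. set (a2 := snd (Ux (cos t, sin t))) in *.
  set (c1 := fst (Uy (cos t, sin t))) in *. set (c2 := snd (Uy (cos t, sin t))) in *.
  set (L := cos t * (- t2 * a1 + t1 * a2) + sin t * (- t2 * c1 + t1 * c2)).
  assert (Gp : G (cos t, sin t) = 0).
  { unfold G, U1, U2. rewrite (H10 _ (on_circle_cs t)), EP. cbn [fst snd]. ring. }
  assert (HL : L <= - b).
  { apply Rnot_lt_le. intro hL.
    set (e := (L + b) / 4). assert (he : 0 < e) by (unfold e; lra).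
    destruct (radial G _ _ (cos t) (sin t) e RG (on_circle_cs t) he) as [r0 [hr0 Hr0]].
    set (r := (Rmax r0 (1/2) + 1) / 2).
    assert (hr : r0 < r < 1 /\ 1/2 <= r).
    { unfold r. pose proof (Rmax_l r0 (1/2)). pose proof (Rmax_r r0 (1/2)).
      assert (Rmax r0 (1/2) < 1) by (apply Rmax_lub_lt; lra). lra. }
    clearbody r. destruct hr as [[hr1 hr2] hr3].
    specialize (Hr0 r (conj hr1 hr2)). rewrite Gp in Hr0. cbn beta in Hr0.
    specialize (Hb (cos t) (sin t) r (circ_id t) (conj hr3 (Rlt_le _ _ hr2))).
    assert (hinv : 1 - r <= / r ^ 2 - 1).
    { assert (0 < r ^ 2) by (apply pow_lt; lra).
      assert (/ r ^ 2 * r ^ 2 = 1) by (field; lra).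
      assert (0 <= (1 - r) * (1 + r - r ^ 2)) by (apply Rmult_le_pos; nra).
      assert (Ex : (1 - r) * r ^ 2 - (1 - r ^ 2) = - ((1 - r) * (1 + r - r ^ 2))) by ring.
      apply (Rmult_le_reg_r (r ^ 2)); auto.
      replace ((/ r ^ 2 - 1) * r ^ 2) with (/ r ^ 2 * r ^ 2 - r ^ 2) by ring. lra. }
    assert (b * (1 - r) <= b * (/ r ^ 2 - 1)) by (apply Rmult_le_compat_l; lra).
    apply Rabs_def2b in Hr0.
    assert (EL : cos t * (- t2 * a1 + t1 * a2) + sin t * (- t2 * c1 + t1 * c2) = L) by reflexivity.
    fold a1 a2 c1 c2 in Hr0. rewrite EL in Hr0.
    assert ((1 - r) * L <= (1 - r) * (- b + 2 * e)).
    { replace ((1 - r) * (- b + 2 * e)) with (- (b * (1 - r)) + 2 * e * (1 - r)) by ring. lra. }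
    assert (L <= - b + 2 * e) by (apply (Rmult_le_reg_l (1 - r)); lra).
    unfold e in *. lra. }
  assert (Ed : a1 * c2 - c1 * a2 = - L).
  { unfold L. rewrite T1, T2.
    assert (E : - (cos t * (- (- sin t * a2 + cos t * c2) * a1 + (- sin t * a1 + cos t * c1) * a2) +
                  sin t * (- (- sin t * a2 + cos t * c2) * c1 + (- sin t * a1 + cos t * c1) * c2))
              = (cos t ^ 2 + sin t ^ 2) * (a1 * c2 - c1 * a2)) by ring.
    rewrite circ_id in E. lra. }
  lra.
Qed.
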